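(* Every 10-dimensional filiform Lie algebra over $\mathbb{K}$ admits a basis $\{X_0,\dots,X_9\}$ in which the bracket is given by the family $F_{10}$ below, for some parameters $a_1,a_2,a_4,a_5,a_7,a_8,\dots,a_{15}\in\mathbb{K}$ satisfying $a_1(2a_2+7a_4+7a_7)=0$, $3a_4^2+3a_4a_7-2a_2a_7=0$, and $a_1(2a_9+5a_{11})-2a_2a_{10}+a_4(7a_8-2a_{10})+a_7(-3a_5+2a_8-7a_{10})=0$.
   Context: $\mathbb{K}$ is algebraically closed of characteristic $0$; filiform means nilpotent of nilindex $\dim-1$. The family $F_{10}$: $\mu(X_0,X_i)=X_{i+1}$ ($1\le i\le 8$), $\mu(X_2,X_7)=a_1X_9$, $\mu(X_1,X_7)=a_1X_8+a_2X_9$, $\mu(X_3,X_6)=-a_1X_9$, $\mu(X_2,X_6)=a_4X_9$, $\mu(X_1,X_6)=a_1X_7+(a_2+a_4)X_8+a_5X_9$, $\mu(X_4,X_5)=a_1X_9$, $\mu(X_3,X_5)=a_7X_9$, $\mu(X_2,X_5)=(a_4+a_7)X_8+a_8X_9$, $\mu(X_1,X_5)=a_1X_6+(a_2+2a_4+a_7)X_7+(a_5+a_8)X_8+a_9X_9$, $\mu(X_3,X_4)=a_7X_8+a_{10}X_9$, $\mu(X_2,X_4)=(a_4+2a_7)X_7+(a_8+a_{10})X_8+a_{11}X_9$, $\mu(X_1,X_4)=a_1X_5+(a_2+3a_4+3a_7)X_6+(a_5+2a_8+a_{10})X_7+(a_9+a_{11})X_8+a_{12}X_9$, $\mu(X_2,X_3)=(a_4+2a_7)X_6+(a_8+a_{10})X_7+a_{11}X_8+a_{13}X_9$,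 $\mu(X_1,X_3)=a_1X_4+(a_2+4a_4+5a_7)X_5+(a_5+3a_8+2a_{10})X_6+(a_9+2a_{11})X_7+(a_{12}+a_{13})X_8+a_{14}X_9$, $\mu(X_1,X_2)=a_1X_3+(a_2+4a_4+5a_7)X_4+(a_5+3a_8+2a_{10})X_5+(a_9+2a_{11})X_6+(a_{12}+a_{13})X_7+a_{14}X_8+a_{15}X_9$, all other brackets $\mu(X_i,X_j)$ ($i<j$) zero. *)

(* Defs.v *)
(* Lie algebras of dimension 10 over K are represented by
   structure constants on the standard basis of K^10 (row vectors 'rV[K]_10). *)
From HB Require Import structures.
From mathcomp Require Import all_boot all_order all_algebra.
Set Implicit Arguments. Unset Strict Implicit. Unset Printing Implicit Defensive.
Import GRing.Theory.
Local Open Scope ring_scope.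

(* structure constants: c i j = [e_i, e_j] (coordinate row vector) *)
Definition sconst (K : fieldType) := 'I_10 -> 'I_10 -> 'rV[K]_10.

Definition br (K : fieldType) (c : sconst K) (u v : 'rV[K]_10) : 'rV[K]_10 :=
  \sum_(i < 10) \sum_(j < 10) (u 0 i * v 0 j) *: c i j.

Definition ebas (K : fieldType) (i : 'I_10) : 'rV[K]_10 := delta_mx 0 i.

(* Lie algebra axioms: alternating on the basis (hence everywhere by bilinearity),
   antisymmetric, Jacobi identity on basis vectors (hence everywhere). *)
Definition is_lie (K : fieldType) (c : sconst K) : Prop :=
  (forall i, c i i = 0) /\ (forall i j, c i j = - c j i) /\
  (forall i j k, br c (ebas K i) (br c (ebas K j) (ebas K k))
               + br c (ebas K j) (br c (ebas K k) (ebas K i))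
               + br c (ebas K k) (br c (ebas K i) (ebas K j)) = 0).

(* [g, V] as a subspace (row space of a square matrix) *)
Definition brsp (K : fieldType) (c : sconst K) (V : 'M[K]_10) : 'M[K]_10 :=
  (\sum_(i < 10) \sum_(j < 10) <<br c (ebas K i) (row j V)>>)%MS.

(* lower central series: lcs c k = C^{k+1} g, with C^1 g = g, C^{k+1} g = [g, C^k g] *)
Definition lcs (K : fieldType) (c : sconst K) (k : nat) : 'M[K]_10 :=
  iter k (brsp c) 1%:M.

(* filiform (dim 10): nilpotent of nilindex 9, i.e. C^9 g <> 0 and C^10 g = 0 *)
Definition filiform10 (K : fieldType) (c : sconst K) : Prop :=
  lcs c 8 != 0 /\ lcs c 9 = 0.

Definition ev (K : fieldType) (k : nat) : 'rV[K]_10 := delta_mx 0 (inord k).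

(* coordinates of mu(X_i, X_j) (i < j) in the basis X_0..X_9, for the family F_10 *)
Definition F10 (K : fieldType) (a : nat -> K) (i j : 'I_10) : 'rV[K]_10 :=
  let e := ev K in
  match nat_of_ord i, nat_of_ord j with
  | 0, 1 => e 2 | 0, 2 => e 3 | 0, 3 => e 4 | 0, 4 => e 5
  | 0, 5 => e 6 | 0, 6 => e 7 | 0, 7 => e 8 | 0, 8 => e 9
  | 2, 7 => a 1%N *: e 9
  | 1, 7 => a 1%N *: e 8 + a 2%N *: e 9
  | 3, 6 => - a 1%N *: e 9
  | 2, 6 => a 4%N *: e 9
  | 1, 6 => a 1%N *: e 7 + (a 2%N + a 4%N) *: e 8 + a 5%N *: e 9
  | 4, 5 => a 1%N *: e 9
  | 3, 5 => a 7%N *: e 9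
  | 2, 5 => (a 4%N + a 7%N) *: e 8 + a 8%N *: e 9
  | 1, 5 => a 1%N *: e 6 + (a 2%N + 2 * a 4%N + a 7%N) *: e 7 + (a 5%N + a 8%N) *: e 8
            + a 9%N *: e 9
  | 3, 4 => a 7%N *: e 8 + a 10%N *: e 9
  | 2, 4 => (a 4%N + 2 * a 7%N) *: e 7 + (a 8%N + a 10%N) *: e 8 + a 11%N *: e 9
  | 1, 4 => a 1%N *: e 5 + (a 2%N + 3 * a 4%N + 3 * a 7%N) *: e 6
            + (a 5%N + 2 * a 8%N + a 10%N) *: e 7 + (a 9%N + a 11%N) *: e 8 + a 12%N *: e 9
  | 2, 3 => (a 4%N + 2 * a 7%N) *: e 6 + (a 8%N + a 10%N) *: e 7 + a 11%N *: e 8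
            + a 13%N *: e 9
  | 1, 3 => a 1%N *: e 4 + (a 2%N + 4 * a 4%N + 5 * a 7%N) *: e 5
            + (a 5%N + 3 * a 8%N + 2 * a 10%N) *: e 6 + (a 9%N + 2 * a 11%N) *: e 7
            + (a 12%N + a 13%N) *: e 8 + a 14%N *: e 9
  | 1, 2 => a 1%N *: e 3 + (a 2%N + 4 * a 4%N + 5 * a 7%N) *: e 4
            + (a 5%N + 3 * a 8%N + 2 * a 10%N) *: e 5 + (a 9%N + 2 * a 11%N) *: e 6
            + (a 12%N + a 13%N) *: e 7 + a 14%N *: e 8 + a 15%N *: e 9
  | _, _ => 0
  end.

(* Main.v *)
Require Import Defs.
From HB Require Import structures.
From mathcomp Require Import all_boot all_order all_algebra.
From mathcomp Require Import ring zify.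
From Stdlib Require Import PeanoNat.
Import GRing.Theory.
Local Open Scope ring_scope.

Lemma inord_eq10 (t k : nat) : (t < 10)%N -> (k < 10)%N -> (@inord 9 t == inord k) = (t == k).
Proof. move=> ht hk; apply/eqP/eqP => [|->//]; move=> /(congr1 (@nat_of_ord 10)); rewrite !inordK //. Qed.




Section Core.
Variable K : fieldType.
Definition up (g : nat -> nat -> nat -> K) (i j t : nat) : K :=
  if Nat.eqb i 0 then (if Nat.leb j 8 && Nat.eqb t (S j) then 1 else 0)
  else if Nat.ltb t (Nat.add i j) || (Nat.eqb i 1 && Nat.eqb j 8) then 0 else g i j t.
Definition tab g i j t := if Nat.eqb i j then 0 else if Nat.ltb i j then up g i j t else - up g j i t.
Definition S10 (h : nat -> K) := h 0%N + h 1%N + h 2%N + h 3%N + h 4%N + h 5%N + h 6%N + h 7%N + h 8%N + h 9%N.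
Definition jac (f : nat -> nat -> nat -> K) i j k t :=
  S10 (fun m => f j k m * f i m t + f k i m * f j m t + f i j m * f k m t).
Definition avec (g : nat -> nat -> nat -> K) (n : nat) : K :=
  match n with
  | 1 => g 1 2 3 | 2 => g 1 7 9 | 4 => g 2 6 9 | 5 => g 1 6 9 | 7 => g 3 4 8
  | 8 => g 2 5 9 | 9 => g 1 5 9 | 10 => g 3 4 9 | 11 => g 2 4 9 | 12 => g 1 4 9
  | 13 => g 2 3 9 | 14 => g 1 3 9 | 15 => g 1 2 9 | _ => 0%R end%N.

Lemma lcK (D x : K) : D != 0 -> D * x = 0 -> x = 0.
Proof. by move=> hD /eqP; rewrite mulf_eq0 (negbTE hD) => /eqP. Qed.

Lemma core (g : nat -> nat -> nat -> K) (h2 : (2:K) != 0) (h3 : (3:K) != 0)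
 (J : forall i j k t, (i < 10)%N -> (j<10)%N -> (k<10)%N -> (t<10)%N -> jac (tab g) i j k t = 0) :
 (forall i j t : nat, (i < j)%N -> (j < 10)%N -> (t < 10)%N ->
    tab g i j t = F10 (avec g) (inord i) (inord j) 0 (inord t)) /\
 (avec g 1%N * (2 * avec g 2%N + 7 * avec g 4%N + 7 * avec g 7%N) = 0 /\
  3 * avec g 4%N ^+ 2 + 3 * avec g 4%N * avec g 7%N - 2 * avec g 2%N * avec g 7%N = 0 /\
  avec g 1%N * (2 * avec g 9%N + 5 * avec g 11%N) - 2 * avec g 2%N * avec g 10%N
    + avec g 4%N * (7 * avec g 8%N - 2 * avec g 10%N)
    + avec g 7%N * (- 3 * avec g 5%N + 2 * avec g 8%N - 7 * avec g 10%N) = 0).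
Proof.
have h0124 : 1 * (g 1 2 3) + (-1) * (g 1 3 4) = 0.
  have := J 0 1 2 4 isT isT isT isT; rewrite /jac /S10 /tab /up /= => H; rewrite -[RHS]H; ring.
have h0125 : 1 * (g 1 2 4) + (-1) * (g 1 3 5) = 0.
  have := J 0 1 2 5 isT isT isT isT; rewrite /jac /S10 /tab /up /= => H; rewrite -[RHS]H; ring.
have h0126 : 1 * (g 1 2 5) + (-1) * (g 1 3 6) = 0.
  have := J 0 1 2 6 isT isT isT isT; rewrite /jac /S10 /tab /up /= => H; rewrite -[RHS]H; ring.
have h0127 : 1 * (g 1 2 6) + (-1) * (g 1 3 7) = 0.
  have := J 0 1 2 7 isT isT isT isT; rewrite /jac /S10 /tab /up /= => H; rewrite -[RHS]H; ring.
have h0128 : 1 * (g 1 2 7) + (-1) * (g 1 3 8) = 0.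
  have := J 0 1 2 8 isT isT isT isT; rewrite /jac /S10 /tab /up /= => H; rewrite -[RHS]H; ring.
have h0129 : 1 * (g 1 2 8) + (-1) * (g 1 3 9) = 0.
  have := J 0 1 2 9 isT isT isT isT; rewrite /jac /S10 /tab /up /= => H; rewrite -[RHS]H; ring.
have h0135 : 1 * (g 1 3 4) + (-1) * (g 1 4 5) + (-1) * (g 2 3 5) = 0.
  have := J 0 1 3 5 isT isT isT isT; rewrite /jac /S10 /tab /up /= => H; rewrite -[RHS]H; ring.
have h0136 : 1 * (g 1 3 5) + (-1) * (g 1 4 6) + (-1) * (g 2 3 6) = 0.
  have := J 0 1 3 6 isT isT isT isT; rewrite /jac /S10 /tab /up /= => H; rewrite -[RHS]H; ring.
have h0137 : 1 * (g 1 3 6) + (-1) * (g 1 4 7) + (-1) * (g 2 3 7) = 0.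
  have := J 0 1 3 7 isT isT isT isT; rewrite /jac /S10 /tab /up /= => H; rewrite -[RHS]H; ring.
have h0138 : 1 * (g 1 3 7) + (-1) * (g 1 4 8) + (-1) * (g 2 3 8) = 0.
  have := J 0 1 3 8 isT isT isT isT; rewrite /jac /S10 /tab /up /= => H; rewrite -[RHS]H; ring.
have h0139 : 1 * (g 1 3 8) + (-1) * (g 1 4 9) + (-1) * (g 2 3 9) = 0.
  have := J 0 1 3 9 isT isT isT isT; rewrite /jac /S10 /tab /up /= => H; rewrite -[RHS]H; ring.
have h0146 : 1 * (g 1 4 5) + (-1) * (g 1 5 6) + (-1) * (g 2 4 6) = 0.
  have := J 0 1 4 6 isT isT isT isT; rewrite /jac /S10 /tab /up /= => H; rewrite -[RHS]H; ring.
have h0147 : 1 * (g 1 4 6) + (-1) * (g 1 5 7) + (-1) * (g 2 4 7) = 0.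
  have := J 0 1 4 7 isT isT isT isT; rewrite /jac /S10 /tab /up /= => H; rewrite -[RHS]H; ring.
have h0148 : 1 * (g 1 4 7) + (-1) * (g 1 5 8) + (-1) * (g 2 4 8) = 0.
  have := J 0 1 4 8 isT isT isT isT; rewrite /jac /S10 /tab /up /= => H; rewrite -[RHS]H; ring.
have h0149 : 1 * (g 1 4 8) + (-1) * (g 1 5 9) + (-1) * (g 2 4 9) = 0.
  have := J 0 1 4 9 isT isT isT isT; rewrite /jac /S10 /tab /up /= => H; rewrite -[RHS]H; ring.
have h0157 : 1 * (g 1 5 6) + (-1) * (g 1 6 7) + (-1) * (g 2 5 7) = 0.
  have := J 0 1 5 7 isT isT isT isT; rewrite /jac /S10 /tab /up /= => H; rewrite -[RHS]H; ring.
have h0158 : 1 * (g 1 5 7) + (-1) * (g 1 6 8) + (-1) * (g 2 5 8) = 0.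
  have := J 0 1 5 8 isT isT isT isT; rewrite /jac /S10 /tab /up /= => H; rewrite -[RHS]H; ring.
have h0159 : 1 * (g 1 5 8) + (-1) * (g 1 6 9) + (-1) * (g 2 5 9) = 0.
  have := J 0 1 5 9 isT isT isT isT; rewrite /jac /S10 /tab /up /= => H; rewrite -[RHS]H; ring.
have h0168 : 1 * (g 1 6 7) + (-1) * (g 1 7 8) + (-1) * (g 2 6 8) = 0.
  have := J 0 1 6 8 isT isT isT isT; rewrite /jac /S10 /tab /up /= => H; rewrite -[RHS]H; ring.
have h0169 : 1 * (g 1 6 8) + (-1) * (g 1 7 9) + (-1) * (g 2 6 9) = 0.
  have := J 0 1 6 9 isT isT isT isT; rewrite /jac /S10 /tab /up /= => H; rewrite -[RHS]H; ring.
have h0179 : 1 * (g 1 7 8) + (-1) * (g 2 7 9) = 0.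
  have := J 0 1 7 9 isT isT isT isT; rewrite /jac /S10 /tab /up /= => H; rewrite -[RHS]H; ring.
have h0236 : 1 * (g 2 3 5) + (-1) * (g 2 4 6) = 0.
  have := J 0 2 3 6 isT isT isT isT; rewrite /jac /S10 /tab /up /= => H; rewrite -[RHS]H; ring.
have h0237 : 1 * (g 2 3 6) + (-1) * (g 2 4 7) = 0.
  have := J 0 2 3 7 isT isT isT isT; rewrite /jac /S10 /tab /up /= => H; rewrite -[RHS]H; ring.
have h0238 : 1 * (g 2 3 7) + (-1) * (g 2 4 8) = 0.
  have := J 0 2 3 8 isT isT isT isT; rewrite /jac /S10 /tab /up /= => H; rewrite -[RHS]H; ring.
have h0239 : 1 * (g 2 3 8) + (-1) * (g 2 4 9) = 0.
  have := J 0 2 3 9 isT isT isT isT; rewrite /jac /S10 /tab /up /= => H; rewrite -[RHS]H; ring.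
have h0247 : 1 * (g 2 4 6) + (-1) * (g 2 5 7) + (-1) * (g 3 4 7) = 0.
  have := J 0 2 4 7 isT isT isT isT; rewrite /jac /S10 /tab /up /= => H; rewrite -[RHS]H; ring.
have h0248 : 1 * (g 2 4 7) + (-1) * (g 2 5 8) + (-1) * (g 3 4 8) = 0.
  have := J 0 2 4 8 isT isT isT isT; rewrite /jac /S10 /tab /up /= => H; rewrite -[RHS]H; ring.
have h0249 : 1 * (g 2 4 8) + (-1) * (g 2 5 9) + (-1) * (g 3 4 9) = 0.
  have := J 0 2 4 9 isT isT isT isT; rewrite /jac /S10 /tab /up /= => H; rewrite -[RHS]H; ring.
have h0258 : 1 * (g 2 5 7) + (-1) * (g 2 6 8) + (-1) * (g 3 5 8) = 0.
  have := J 0 2 5 8 isT isT isT isT; rewrite /jac /S10 /tab /up /= => H; rewrite -[RHS]H; ring.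
have h0259 : 1 * (g 2 5 8) + (-1) * (g 2 6 9) + (-1) * (g 3 5 9) = 0.
  have := J 0 2 5 9 isT isT isT isT; rewrite /jac /S10 /tab /up /= => H; rewrite -[RHS]H; ring.
have h0269 : 1 * (g 2 6 8) + (-1) * (g 2 7 9) + (-1) * (g 3 6 9) = 0.
  have := J 0 2 6 9 isT isT isT isT; rewrite /jac /S10 /tab /up /= => H; rewrite -[RHS]H; ring.
have h0348 : 1 * (g 3 4 7) + (-1) * (g 3 5 8) = 0.
  have := J 0 3 4 8 isT isT isT isT; rewrite /jac /S10 /tab /up /= => H; rewrite -[RHS]H; ring.
have h0349 : 1 * (g 3 4 8) + (-1) * (g 3 5 9) = 0.
  have := J 0 3 4 9 isT isT isT isT; rewrite /jac /S10 /tab /up /= => H; rewrite -[RHS]H; ring.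
have h0359 : 1 * (g 3 5 8) + (-1) * (g 3 6 9) + (-1) * (g 4 5 9) = 0.
  have := J 0 3 5 9 isT isT isT isT; rewrite /jac /S10 /tab /up /= => H; rewrite -[RHS]H; ring.
have h1236 : (-1) * (g 1 3 4) * (g 2 4 6) + 1 * (g 1 5 6) * (g 2 3 5) = 0.
  have := J 1 2 3 6 isT isT isT isT; rewrite /jac /S10 /tab /up /= => H; rewrite -[RHS]H; ring.
have h1237 : 1 * (g 1 2 4) * (g 3 4 7) + (-1) * (g 1 3 4) * (g 2 4 7) + (-1) * (g 1 3 5) * (g 2 5 7) + 1 * (g 1 5 7) * (g 2 3 5) + 1 * (g 1 6 7) * (g 2 3 6) = 0.
  have := J 1 2 3 7 isT isT isT isT; rewrite /jac /S10 /tab /up /= => H; rewrite -[RHS]H; ring.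
have h1238 : 1 * (g 1 2 4) * (g 3 4 8) + 1 * (g 1 2 5) * (g 3 5 8) + (-1) * (g 1 3 4) * (g 2 4 8) + (-1) * (g 1 3 5) * (g 2 5 8) + (-1) * (g 1 3 6) * (g 2 6 8) + 1 * (g 1 5 8) * (g 2 3 5) + 1 * (g 1 6 8) * (g 2 3 6) + 1 * (g 1 7 8) * (g 2 3 7) = 0.
  have := J 1 2 3 8 isT isT isT isT; rewrite /jac /S10 /tab /up /= => H; rewrite -[RHS]H; ring.
have h1239 : 1 * (g 1 2 4) * (g 3 4 9) + 1 * (g 1 2 5) * (g 3 5 9) + 1 * (g 1 2 6) * (g 3 6 9) + (-1) * (g 1 3 4) * (g 2 4 9) + (-1) * (g 1 3 5) * (g 2 5 9) + (-1) * (g 1 3 6) * (g 2 6 9) + (-1) * (g 1 3 7) * (g 2 7 9) + 1 * (g 1 5 9) * (g 2 3 5) + 1 * (g 1 6 9) * (g 2 3 6) + 1 * (g 1 7 9) * (g 2 3 7) = 0.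
  have := J 1 2 3 9 isT isT isT isT; rewrite /jac /S10 /tab /up /= => H; rewrite -[RHS]H; ring.
have h1247 : (-1) * (g 1 2 3) * (g 3 4 7) + (-1) * (g 1 4 5) * (g 2 5 7) + 1 * (g 1 6 7) * (g 2 4 6) = 0.
  have := J 1 2 4 7 isT isT isT isT; rewrite /jac /S10 /tab /up /= => H; rewrite -[RHS]H; ring.
have h1248 : (-1) * (g 1 2 3) * (g 3 4 8) + (-1) * (g 1 4 5) * (g 2 5 8) + (-1) * (g 1 4 6) * (g 2 6 8) + 1 * (g 1 6 8) * (g 2 4 6) + 1 * (g 1 7 8) * (g 2 4 7) = 0.
  have := J 1 2 4 8 isT isT isT isT; rewrite /jac /S10 /tab /up /= => H; rewrite -[RHS]H; ring.
have h1249 : (-1) * (g 1 2 3) * (g 3 4 9) + 1 * (g 1 2 5) * (g 4 5 9) + (-1) * (g 1 4 5) * (g 2 5 9) + (-1) * (g 1 4 6) * (g 2 6 9) + (-1) * (g 1 4 7) * (g 2 7 9) + 1 * (g 1 6 9) * (g 2 4 6) + 1 * (g 1 7 9) * (g 2 4 7) = 0.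
  have := J 1 2 4 9 isT isT isT isT; rewrite /jac /S10 /tab /up /= => H; rewrite -[RHS]H; ring.
have h1258 : (-1) * (g 1 2 3) * (g 3 5 8) + (-1) * (g 1 5 6) * (g 2 6 8) + 1 * (g 1 7 8) * (g 2 5 7) = 0.
  have := J 1 2 5 8 isT isT isT isT; rewrite /jac /S10 /tab /up /= => H; rewrite -[RHS]H; ring.
have h1259 : (-1) * (g 1 2 3) * (g 3 5 9) + (-1) * (g 1 2 4) * (g 4 5 9) + (-1) * (g 1 5 6) * (g 2 6 9) + (-1) * (g 1 5 7) * (g 2 7 9) + 1 * (g 1 7 9) * (g 2 5 7) = 0.
  have := J 1 2 5 9 isT isT isT isT; rewrite /jac /S10 /tab /up /= => H; rewrite -[RHS]H; ring.
have h1269 : (-1) * (g 1 2 3) * (g 3 6 9) + (-1) * (g 1 6 7) * (g 2 7 9) = 0.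
  have := J 1 2 6 9 isT isT isT isT; rewrite /jac /S10 /tab /up /= => H; rewrite -[RHS]H; ring.
have h1348 : (-1) * (g 1 4 5) * (g 3 5 8) + 1 * (g 1 7 8) * (g 3 4 7) = 0.
  have := J 1 3 4 8 isT isT isT isT; rewrite /jac /S10 /tab /up /= => H; rewrite -[RHS]H; ring.
have h1349 : 1 * (g 1 3 5) * (g 4 5 9) + (-1) * (g 1 4 5) * (g 3 5 9) + (-1) * (g 1 4 6) * (g 3 6 9) + 1 * (g 1 7 9) * (g 3 4 7) = 0.
  have := J 1 3 4 9 isT isT isT isT; rewrite /jac /S10 /tab /up /= => H; rewrite -[RHS]H; ring.
have h1359 : (-1) * (g 1 3 4) * (g 4 5 9) + (-1) * (g 1 5 6) * (g 3 6 9) = 0.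
  have := J 1 3 5 9 isT isT isT isT; rewrite /jac /S10 /tab /up /= => H; rewrite -[RHS]H; ring.
have h2349 : 1 * (g 2 3 5) * (g 4 5 9) + (-1) * (g 2 4 6) * (g 3 6 9) + 1 * (g 2 7 9) * (g 3 4 7) = 0.
  have := J 2 3 4 9 isT isT isT isT; rewrite /jac /S10 /tab /up /= => H; rewrite -[RHS]H; ring.
have e124 : g 1 2 4 = 1 * (g 1 7 9) + 4 * (g 2 6 9) + 5 * (g 3 4 8).
  apply/subr0_eq; transitivity ((1) * (1 * (g 1 2 4) + (-1) * (g 1 3 5)) + (1) * (1 * (g 1 3 5) + (-1) * (g 1 4 6) + (-1) * (g 2 3 6)) + (1) * (1 * (g 1 4 6) + (-1) * (g 1 5 7) + (-1) * (g 2 4 7)) + (1) * (1 * (g 1 5 7) + (-1) * (g 1 6 8) + (-1) * (g 2 5 8)) + (1) * (1 * (g 1 6 8) + (-1) * (g 1 7 9) + (-1) * (g 2 6 9)) + (1) * (1 * (g 2 3 6) + (-1) * (g 2 4 7)) + (2) * (1 * (g 2 4 7) + (-1) * (g 2 5 8) + (-1) * (g 3 4 8)) + (3) * (1 * (g 2 5 8) + (-1) * (g 2 6 9) + (-1) * (g 3 5 9)) + (-3) * (1 * (g 3 4 8) + (-1) * (g 3 5 9))); first ring.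
  by rewrite h0125 h0136 h0147 h0158 h0169 h0237 h0248 h0259 h0349; ring.
have e125 : g 1 2 5 = 1 * (g 1 6 9) + 3 * (g 2 5 9) + 2 * (g 3 4 9).
  apply/subr0_eq; transitivity ((1) * (1 * (g 1 2 5) + (-1) * (g 1 3 6)) + (1) * (1 * (g 1 3 6) + (-1) * (g 1 4 7) + (-1) * (g 2 3 7)) + (1) * (1 * (g 1 4 7) + (-1) * (g 1 5 8) + (-1) * (g 2 4 8)) + (1) * (1 * (g 1 5 8) + (-1) * (g 1 6 9) + (-1) * (g 2 5 9)) + (1) * (1 * (g 2 3 7) + (-1) * (g 2 4 8)) + (2) * (1 * (g 2 4 8) + (-1) * (g 2 5 9) + (-1) * (g 3 4 9))); first ring.
  by rewrite h0126 h0137 h0148 h0159 h0238 h0249; ring.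
have e126 : g 1 2 6 = 1 * (g 1 5 9) + 2 * (g 2 4 9).
  apply/subr0_eq; transitivity ((1) * (1 * (g 1 2 6) + (-1) * (g 1 3 7)) + (1) * (1 * (g 1 3 7) + (-1) * (g 1 4 8) + (-1) * (g 2 3 8)) + (1) * (1 * (g 1 4 8) + (-1) * (g 1 5 9) + (-1) * (g 2 4 9)) + (1) * (1 * (g 2 3 8) + (-1) * (g 2 4 9))); first ring.
  by rewrite h0127 h0138 h0149 h0239; ring.
have e127 : g 1 2 7 = 1 * (g 1 4 9) + 1 * (g 2 3 9).
  apply/subr0_eq; transitivity ((1) * (1 * (g 1 2 7) + (-1) * (g 1 3 8)) + (1) * (1 * (g 1 3 8) + (-1) * (g 1 4 9) + (-1) * (g 2 3 9))); first ring.
  by rewrite h0128 h0139; ring.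
have e128 : g 1 2 8 = 1 * (g 1 3 9).
  apply/subr0_eq; transitivity ((1) * (1 * (g 1 2 8) + (-1) * (g 1 3 9))); first ring.
  by rewrite h0129; ring.
have e134 : g 1 3 4 = 1 * (g 1 2 3).
  apply/subr0_eq; transitivity ((-1) * (1 * (g 1 2 3) + (-1) * (g 1 3 4))); first ring.
  by rewrite h0124; ring.
have e135 : g 1 3 5 = 1 * (g 1 7 9) + 4 * (g 2 6 9) + 5 * (g 3 4 8).
  apply/subr0_eq; transitivity ((1) * (1 * (g 1 3 5) + (-1) * (g 1 4 6) + (-1) * (g 2 3 6)) + (1) * (1 * (g 1 4 6) + (-1) * (g 1 5 7) + (-1) * (g 2 4 7)) + (1) * (1 * (g 1 5 7) + (-1) * (g 1 6 8) + (-1) * (g 2 5 8)) + (1) * (1 * (g 1 6 8) + (-1) * (g 1 7 9) + (-1) * (g 2 6 9)) + (1) * (1 * (g 2 3 6) + (-1) * (g 2 4 7)) + (2) * (1 * (g 2 4 7) + (-1) * (g 2 5 8) + (-1) * (g 3 4 8)) + (3) * (1 * (g 2 5 8) + (-1) * (g 2 6 9) + (-1) * (g 3 5 9)) + (-3) * (1 * (g 3 4 8) + (-1) * (g 3 5 9))); first ring.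
  by rewrite h0136 h0147 h0158 h0169 h0237 h0248 h0259 h0349; ring.
have e136 : g 1 3 6 = 1 * (g 1 6 9) + 3 * (g 2 5 9) + 2 * (g 3 4 9).
  apply/subr0_eq; transitivity ((1) * (1 * (g 1 3 6) + (-1) * (g 1 4 7) + (-1) * (g 2 3 7)) + (1) * (1 * (g 1 4 7) + (-1) * (g 1 5 8) + (-1) * (g 2 4 8)) + (1) * (1 * (g 1 5 8) + (-1) * (g 1 6 9) + (-1) * (g 2 5 9)) + (1) * (1 * (g 2 3 7) + (-1) * (g 2 4 8)) + (2) * (1 * (g 2 4 8) + (-1) * (g 2 5 9) + (-1) * (g 3 4 9))); first ring.
  by rewrite h0137 h0148 h0159 h0238 h0249; ring.
have e137 : g 1 3 7 = 1 * (g 1 5 9) + 2 * (g 2 4 9).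
  apply/subr0_eq; transitivity ((1) * (1 * (g 1 3 7) + (-1) * (g 1 4 8) + (-1) * (g 2 3 8)) + (1) * (1 * (g 1 4 8) + (-1) * (g 1 5 9) + (-1) * (g 2 4 9)) + (1) * (1 * (g 2 3 8) + (-1) * (g 2 4 9))); first ring.
  by rewrite h0138 h0149 h0239; ring.
have e138 : g 1 3 8 = 1 * (g 1 4 9) + 1 * (g 2 3 9).
  apply/subr0_eq; transitivity ((1) * (1 * (g 1 3 8) + (-1) * (g 1 4 9) + (-1) * (g 2 3 9))); first ring.
  by rewrite h0139; ring.
have e145 : g 1 4 5 = 1 * (g 1 2 3) + (-1) * (g 2 3 5).
  apply/subr0_eq; transitivity ((-1) * (1 * (g 1 2 3) + (-1) * (g 1 3 4)) + (-1) * (1 * (g 1 3 4) + (-1) * (g 1 4 5) + (-1) * (g 2 3 5))); first ring.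
  by rewrite h0124 h0135; ring.
have e146 : g 1 4 6 = 1 * (g 1 7 9) + 3 * (g 2 6 9) + 3 * (g 3 4 8).
  apply/subr0_eq; transitivity ((1) * (1 * (g 1 4 6) + (-1) * (g 1 5 7) + (-1) * (g 2 4 7)) + (1) * (1 * (g 1 5 7) + (-1) * (g 1 6 8) + (-1) * (g 2 5 8)) + (1) * (1 * (g 1 6 8) + (-1) * (g 1 7 9) + (-1) * (g 2 6 9)) + (1) * (1 * (g 2 4 7) + (-1) * (g 2 5 8) + (-1) * (g 3 4 8)) + (2) * (1 * (g 2 5 8) + (-1) * (g 2 6 9) + (-1) * (g 3 5 9)) + (-2) * (1 * (g 3 4 8) + (-1) * (g 3 5 9))); first ring.
  by rewrite h0147 h0158 h0169 h0248 h0259 h0349; ring.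
have e147 : g 1 4 7 = 1 * (g 1 6 9) + 2 * (g 2 5 9) + 1 * (g 3 4 9).
  apply/subr0_eq; transitivity ((1) * (1 * (g 1 4 7) + (-1) * (g 1 5 8) + (-1) * (g 2 4 8)) + (1) * (1 * (g 1 5 8) + (-1) * (g 1 6 9) + (-1) * (g 2 5 9)) + (1) * (1 * (g 2 4 8) + (-1) * (g 2 5 9) + (-1) * (g 3 4 9))); first ring.
  by rewrite h0148 h0159 h0249; ring.
have e148 : g 1 4 8 = 1 * (g 1 5 9) + 1 * (g 2 4 9).
  apply/subr0_eq; transitivity ((1) * (1 * (g 1 4 8) + (-1) * (g 1 5 9) + (-1) * (g 2 4 9))); first ring.
  by rewrite h0149; ring.
have e156 : g 1 5 6 = 1 * (g 1 2 3) + (-2) * (g 2 3 5).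
  apply/subr0_eq; transitivity ((-1) * (1 * (g 1 2 3) + (-1) * (g 1 3 4)) + (-1) * (1 * (g 1 3 4) + (-1) * (g 1 4 5) + (-1) * (g 2 3 5)) + (-1) * (1 * (g 1 4 5) + (-1) * (g 1 5 6) + (-1) * (g 2 4 6)) + (1) * (1 * (g 2 3 5) + (-1) * (g 2 4 6))); first ring.
  by rewrite h0124 h0135 h0146 h0236; ring.
have e157 : g 1 5 7 = 1 * (g 1 7 9) + 2 * (g 2 6 9) + 1 * (g 3 4 8).
  apply/subr0_eq; transitivity ((1) * (1 * (g 1 5 7) + (-1) * (g 1 6 8) + (-1) * (g 2 5 8)) + (1) * (1 * (g 1 6 8) + (-1) * (g 1 7 9) + (-1) * (g 2 6 9)) + (1) * (1 * (g 2 5 8) + (-1) * (g 2 6 9) + (-1) * (g 3 5 9)) + (-1) * (1 * (g 3 4 8) + (-1) * (g 3 5 9))); first ring.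
  by rewrite h0158 h0169 h0259 h0349; ring.
have e158 : g 1 5 8 = 1 * (g 1 6 9) + 1 * (g 2 5 9).
  apply/subr0_eq; transitivity ((1) * (1 * (g 1 5 8) + (-1) * (g 1 6 9) + (-1) * (g 2 5 9))); first ring.
  by rewrite h0159; ring.
have e167 : g 1 6 7 = 1 * (g 1 2 3) + (-2) * (g 2 3 5) + (-1) * (g 2 5 7).
  apply/subr0_eq; transitivity ((-1) * (1 * (g 1 2 3) + (-1) * (g 1 3 4)) + (-1) * (1 * (g 1 3 4) + (-1) * (g 1 4 5) + (-1) * (g 2 3 5)) + (-1) * (1 * (g 1 4 5) + (-1) * (g 1 5 6) + (-1) * (g 2 4 6)) + (-1) * (1 * (g 1 5 6) + (-1) * (g 1 6 7) + (-1) * (g 2 5 7)) + (1) * (1 * (g 2 3 5) + (-1) * (g 2 4 6))); first ring.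
  by rewrite h0124 h0135 h0146 h0157 h0236; ring.
have e168 : g 1 6 8 = 1 * (g 1 7 9) + 1 * (g 2 6 9).
  apply/subr0_eq; transitivity ((1) * (1 * (g 1 6 8) + (-1) * (g 1 7 9) + (-1) * (g 2 6 9))); first ring.
  by rewrite h0169; ring.
have e178 : g 1 7 8 = 1 * (g 1 2 3) + (-1) * (g 2 3 5) + (-3) * (g 2 5 7).
  apply/subr0_eq; transitivity ((-1) * (1 * (g 1 2 3) + (-1) * (g 1 3 4)) + (-1) * (1 * (g 1 3 4) + (-1) * (g 1 4 5) + (-1) * (g 2 3 5)) + (-1) * (1 * (g 1 4 5) + (-1) * (g 1 5 6) + (-1) * (g 2 4 6)) + (-1) * (1 * (g 1 5 6) + (-1) * (g 1 6 7) + (-1) * (g 2 5 7)) + (-1) * (1 * (g 1 6 7) + (-1) * (g 1 7 8) + (-1) * (g 2 6 8)) + (-1) * (1 * (g 2 4 6) + (-1) * (g 2 5 7) + (-1) * (g 3 4 7)) + (1) * (1 * (g 2 5 7) + (-1) * (g 2 6 8) + (-1) * (g 3 5 8)) + (-1) * (1 * (g 3 4 7) + (-1) * (g 3 5 8))); first ring.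
  by rewrite h0124 h0135 h0146 h0157 h0168 h0247 h0258 h0348; ring.
have e236 : g 2 3 6 = 1 * (g 2 6 9) + 2 * (g 3 4 8).
  apply/subr0_eq; transitivity ((1) * (1 * (g 2 3 6) + (-1) * (g 2 4 7)) + (1) * (1 * (g 2 4 7) + (-1) * (g 2 5 8) + (-1) * (g 3 4 8)) + (1) * (1 * (g 2 5 8) + (-1) * (g 2 6 9) + (-1) * (g 3 5 9)) + (-1) * (1 * (g 3 4 8) + (-1) * (g 3 5 9))); first ring.
  by rewrite h0237 h0248 h0259 h0349; ring.
have e237 : g 2 3 7 = 1 * (g 2 5 9) + 1 * (g 3 4 9).
  apply/subr0_eq; transitivity ((1) * (1 * (g 2 3 7) + (-1) * (g 2 4 8)) + (1) * (1 * (g 2 4 8) + (-1) * (g 2 5 9) + (-1) * (g 3 4 9))); first ring.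
  by rewrite h0238 h0249; ring.
have e238 : g 2 3 8 = 1 * (g 2 4 9).
  apply/subr0_eq; transitivity ((1) * (1 * (g 2 3 8) + (-1) * (g 2 4 9))); first ring.
  by rewrite h0239; ring.
have e246 : g 2 4 6 = 1 * (g 2 3 5).
  apply/subr0_eq; transitivity ((-1) * (1 * (g 2 3 5) + (-1) * (g 2 4 6))); first ring.
  by rewrite h0236; ring.
have e247 : g 2 4 7 = 1 * (g 2 6 9) + 2 * (g 3 4 8).
  apply/subr0_eq; transitivity ((1) * (1 * (g 2 4 7) + (-1) * (g 2 5 8) + (-1) * (g 3 4 8)) + (1) * (1 * (g 2 5 8) + (-1) * (g 2 6 9) + (-1) * (g 3 5 9)) + (-1) * (1 * (g 3 4 8) + (-1) * (g 3 5 9))); first ring.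
  by rewrite h0248 h0259 h0349; ring.
have e248 : g 2 4 8 = 1 * (g 2 5 9) + 1 * (g 3 4 9).
  apply/subr0_eq; transitivity ((1) * (1 * (g 2 4 8) + (-1) * (g 2 5 9) + (-1) * (g 3 4 9))); first ring.
  by rewrite h0249; ring.
have e258 : g 2 5 8 = 1 * (g 2 6 9) + 1 * (g 3 4 8).
  apply/subr0_eq; transitivity ((1) * (1 * (g 2 5 8) + (-1) * (g 2 6 9) + (-1) * (g 3 5 9)) + (-1) * (1 * (g 3 4 8) + (-1) * (g 3 5 9))); first ring.
  by rewrite h0259 h0349; ring.
have e268 : g 2 6 8 = (-1) * (g 2 3 5) + 2 * (g 2 5 7).
  apply/subr0_eq; transitivity ((1) * (1 * (g 2 3 5) + (-1) * (g 2 4 6)) + (1) * (1 * (g 2 4 6) + (-1) * (g 2 5 7) + (-1) * (g 3 4 7)) + (-1) * (1 * (g 2 5 7) + (-1) * (g 2 6 8) + (-1) * (g 3 5 8)) + (1) * (1 * (g 3 4 7) + (-1) * (g 3 5 8))); first ring.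
  by rewrite h0236 h0247 h0258 h0348; ring.
have e279 : g 2 7 9 = 1 * (g 1 2 3) + (-1) * (g 2 3 5) + (-3) * (g 2 5 7).
  apply/subr0_eq; transitivity ((-1) * (1 * (g 1 2 3) + (-1) * (g 1 3 4)) + (-1) * (1 * (g 1 3 4) + (-1) * (g 1 4 5) + (-1) * (g 2 3 5)) + (-1) * (1 * (g 1 4 5) + (-1) * (g 1 5 6) + (-1) * (g 2 4 6)) + (-1) * (1 * (g 1 5 6) + (-1) * (g 1 6 7) + (-1) * (g 2 5 7)) + (-1) * (1 * (g 1 6 7) + (-1) * (g 1 7 8) + (-1) * (g 2 6 8)) + (-1) * (1 * (g 1 7 8) + (-1) * (g 2 7 9)) + (-1) * (1 * (g 2 4 6) + (-1) * (g 2 5 7) + (-1) * (g 3 4 7)) + (1) * (1 * (g 2 5 7) + (-1) * (g 2 6 8) + (-1) * (g 3 5 8)) + (-1) * (1 * (g 3 4 7) + (-1) * (g 3 5 8))); first ring.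
  by rewrite h0124 h0135 h0146 h0157 h0168 h0179 h0247 h0258 h0348; ring.
have e347 : g 3 4 7 = 1 * (g 2 3 5) + (-1) * (g 2 5 7).
  apply/subr0_eq; transitivity ((-1) * (1 * (g 2 3 5) + (-1) * (g 2 4 6)) + (-1) * (1 * (g 2 4 6) + (-1) * (g 2 5 7) + (-1) * (g 3 4 7))); first ring.
  by rewrite h0236 h0247; ring.
have e358 : g 3 5 8 = 1 * (g 2 3 5) + (-1) * (g 2 5 7).
  apply/subr0_eq; transitivity ((-1) * (1 * (g 2 3 5) + (-1) * (g 2 4 6)) + (-1) * (1 * (g 2 4 6) + (-1) * (g 2 5 7) + (-1) * (g 3 4 7)) + (-1) * (1 * (g 3 4 7) + (-1) * (g 3 5 8))); first ring.
  by rewrite h0236 h0247 h0348; ring.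
have e359 : g 3 5 9 = 1 * (g 3 4 8).
  apply/subr0_eq; transitivity ((-1) * (1 * (g 3 4 8) + (-1) * (g 3 5 9))); first ring.
  by rewrite h0349; ring.
have e369 : g 3 6 9 = (-1) * (g 1 2 3) + 5 * (g 2 5 7).
  apply/subr0_eq; transitivity ((1) * (1 * (g 1 2 3) + (-1) * (g 1 3 4)) + (1) * (1 * (g 1 3 4) + (-1) * (g 1 4 5) + (-1) * (g 2 3 5)) + (1) * (1 * (g 1 4 5) + (-1) * (g 1 5 6) + (-1) * (g 2 4 6)) + (1) * (1 * (g 1 5 6) + (-1) * (g 1 6 7) + (-1) * (g 2 5 7)) + (1) * (1 * (g 1 6 7) + (-1) * (g 1 7 8) + (-1) * (g 2 6 8)) + (1) * (1 * (g 1 7 8) + (-1) * (g 2 7 9)) + (1) * (1 * (g 2 3 5) + (-1) * (g 2 4 6)) + (2) * (1 * (g 2 4 6) + (-1) * (g 2 5 7) + (-1) * (g 3 4 7)) + (-2) * (1 * (g 2 5 7) + (-1) * (g 2 6 8) + (-1) * (g 3 5 8)) + (-1) * (1 * (g 2 6 8) + (-1) * (g 2 7 9) + (-1) * (g 3 6 9)) + (2) * (1 * (g 3 4 7) + (-1) * (g 3 5 8))); first ring.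
  by rewrite h0124 h0135 h0146 h0157 h0168 h0179 h0236 h0247 h0258 h0269 h0348; ring.
have e459 : g 4 5 9 = 1 * (g 1 2 3) + 1 * (g 2 3 5) + (-6) * (g 2 5 7).
  apply/subr0_eq; transitivity ((-1) * (1 * (g 1 2 3) + (-1) * (g 1 3 4)) + (-1) * (1 * (g 1 3 4) + (-1) * (g 1 4 5) + (-1) * (g 2 3 5)) + (-1) * (1 * (g 1 4 5) + (-1) * (g 1 5 6) + (-1) * (g 2 4 6)) + (-1) * (1 * (g 1 5 6) + (-1) * (g 1 6 7) + (-1) * (g 2 5 7)) + (-1) * (1 * (g 1 6 7) + (-1) * (g 1 7 8) + (-1) * (g 2 6 8)) + (-1) * (1 * (g 1 7 8) + (-1) * (g 2 7 9)) + (-2) * (1 * (g 2 3 5) + (-1) * (g 2 4 6)) + (-3) * (1 * (g 2 4 6) + (-1) * (g 2 5 7) + (-1) * (g 3 4 7)) + (2) * (1 * (g 2 5 7) + (-1) * (g 2 6 8) + (-1) * (g 3 5 8)) + (1) * (1 * (g 2 6 8) + (-1) * (g 2 7 9) + (-1) * (g 3 6 9)) + (-3) * (1 * (g 3 4 7) + (-1) * (g 3 5 8)) + (-1) * (1 * (g 3 5 8) + (-1) * (g 3 6 9) + (-1) * (g 4 5 9))); first ring.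
  by rewrite h0124 h0135 h0146 h0157 h0168 h0179 h0236 h0247 h0258 h0269 h0348 h0359; ring.
rewrite ?e124 ?e125 ?e126 ?e127 ?e128 ?e134 ?e135 ?e136 ?e137 ?e138 ?e145 ?e146 ?e147 ?e148 ?e156 ?e157 ?e158 ?e167 ?e168 ?e178 ?e236 ?e237 ?e238 ?e246 ?e247 ?e248 ?e258 ?e268 ?e279 ?e347 ?e358 ?e359 ?e369 ?e459 in h1236.
rewrite ?e124 ?e125 ?e126 ?e127 ?e128 ?e134 ?e135 ?e136 ?e137 ?e138 ?e145 ?e146 ?e147 ?e148 ?e156 ?e157 ?e158 ?e167 ?e168 ?e178 ?e236 ?e237 ?e238 ?e246 ?e247 ?e248 ?e258 ?e268 ?e279 ?e347 ?e358 ?e359 ?e369 ?e459 in h1237.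
rewrite ?e124 ?e125 ?e126 ?e127 ?e128 ?e134 ?e135 ?e136 ?e137 ?e138 ?e145 ?e146 ?e147 ?e148 ?e156 ?e157 ?e158 ?e167 ?e168 ?e178 ?e236 ?e237 ?e238 ?e246 ?e247 ?e248 ?e258 ?e268 ?e279 ?e347 ?e358 ?e359 ?e369 ?e459 in h1238.
rewrite ?e124 ?e125 ?e126 ?e127 ?e128 ?e134 ?e135 ?e136 ?e137 ?e138 ?e145 ?e146 ?e147 ?e148 ?e156 ?e157 ?e158 ?e167 ?e168 ?e178 ?e236 ?e237 ?e238 ?e246 ?e247 ?e248 ?e258 ?e268 ?e279 ?e347 ?e358 ?e359 ?e369 ?e459 in h1239.
rewrite ?e124 ?e125 ?e126 ?e127 ?e128 ?e134 ?e135 ?e136 ?e137 ?e138 ?e145 ?e146 ?e147 ?e148 ?e156 ?e157 ?e158 ?e167 ?e168 ?e178 ?e236 ?e237 ?e238 ?e246 ?e247 ?e248 ?e258 ?e268 ?e279 ?e347 ?e358 ?e359 ?e369 ?e459 in h1247.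
rewrite ?e124 ?e125 ?e126 ?e127 ?e128 ?e134 ?e135 ?e136 ?e137 ?e138 ?e145 ?e146 ?e147 ?e148 ?e156 ?e157 ?e158 ?e167 ?e168 ?e178 ?e236 ?e237 ?e238 ?e246 ?e247 ?e248 ?e258 ?e268 ?e279 ?e347 ?e358 ?e359 ?e369 ?e459 in h1248.
rewrite ?e124 ?e125 ?e126 ?e127 ?e128 ?e134 ?e135 ?e136 ?e137 ?e138 ?e145 ?e146 ?e147 ?e148 ?e156 ?e157 ?e158 ?e167 ?e168 ?e178 ?e236 ?e237 ?e238 ?e246 ?e247 ?e248 ?e258 ?e268 ?e279 ?e347 ?e358 ?e359 ?e369 ?e459 in h1249.
rewrite ?e124 ?e125 ?e126 ?e127 ?e128 ?e134 ?e135 ?e136 ?e137 ?e138 ?e145 ?e146 ?e147 ?e148 ?e156 ?e157 ?e158 ?e167 ?e168 ?e178 ?e236 ?e237 ?e238 ?e246 ?e247 ?e248 ?e258 ?e268 ?e279 ?e347 ?e358 ?e359 ?e369 ?e459 in h1258.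
rewrite ?e124 ?e125 ?e126 ?e127 ?e128 ?e134 ?e135 ?e136 ?e137 ?e138 ?e145 ?e146 ?e147 ?e148 ?e156 ?e157 ?e158 ?e167 ?e168 ?e178 ?e236 ?e237 ?e238 ?e246 ?e247 ?e248 ?e258 ?e268 ?e279 ?e347 ?e358 ?e359 ?e369 ?e459 in h1259.
rewrite ?e124 ?e125 ?e126 ?e127 ?e128 ?e134 ?e135 ?e136 ?e137 ?e138 ?e145 ?e146 ?e147 ?e148 ?e156 ?e157 ?e158 ?e167 ?e168 ?e178 ?e236 ?e237 ?e238 ?e246 ?e247 ?e248 ?e258 ?e268 ?e279 ?e347 ?e358 ?e359 ?e369 ?e459 in h1269.
rewrite ?e124 ?e125 ?e126 ?e127 ?e128 ?e134 ?e135 ?e136 ?e137 ?e138 ?e145 ?e146 ?e147 ?e148 ?e156 ?e157 ?e158 ?e167 ?e168 ?e178 ?e236 ?e237 ?e238 ?e246 ?e247 ?e248 ?e258 ?e268 ?e279 ?e347 ?e358 ?e359 ?e369 ?e459 in h1348.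
rewrite ?e124 ?e125 ?e126 ?e127 ?e128 ?e134 ?e135 ?e136 ?e137 ?e138 ?e145 ?e146 ?e147 ?e148 ?e156 ?e157 ?e158 ?e167 ?e168 ?e178 ?e236 ?e237 ?e238 ?e246 ?e247 ?e248 ?e258 ?e268 ?e279 ?e347 ?e358 ?e359 ?e369 ?e459 in h1349.
rewrite ?e124 ?e125 ?e126 ?e127 ?e128 ?e134 ?e135 ?e136 ?e137 ?e138 ?e145 ?e146 ?e147 ?e148 ?e156 ?e157 ?e158 ?e167 ?e168 ?e178 ?e236 ?e237 ?e238 ?e246 ?e247 ?e248 ?e258 ?e268 ?e279 ?e347 ?e358 ?e359 ?e369 ?e459 in h1359.
rewrite ?e124 ?e125 ?e126 ?e127 ?e128 ?e134 ?e135 ?e136 ?e137 ?e138 ?e145 ?e146 ?e147 ?e148 ?e156 ?e157 ?e158 ?e167 ?e168 ?e178 ?e236 ?e237 ?e238 ?e246 ?e247 ?e248 ?e258 ?e268 ?e279 ?e347 ?e358 ?e359 ?e369 ?e459 in h2349.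

have g0 : g 2 3 5 = 0.
  have : g 2 3 5 * g 2 3 5 = 0.
    apply: (@lcK (-2)); first by rewrite oppr_eq0.
    by rewrite -[RHS]h1236; ring.
  by move/eqP; rewrite mulf_eq0 orbb => /eqP.
rewrite ?g0 in h1348 h1238 h1259 h1239.
have s0 : g 2 5 7 = 0.
  have : g 2 5 7 * g 2 5 7 = 0.
    apply: (@lcK (3)) => //.
    by rewrite -[RHS]h1348; ring.
  by move/eqP; rewrite mulf_eq0 orbb => /eqP.
rewrite ?s0 in h1238 h1259 h1239.
split.
{ move=> i j t.
  case: i => [|[|[|[|[|[|[|[|[|[|i]]]]]]]]]]; case: j => [|[|[|[|[|[|[|[|[|[|j]]]]]]]]]] //;
   case: t => [|[|[|[|[|[|[|[|[|[|t]]]]]]]]]] // _ _ _.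
  all: rewrite /tab /up /avec /F10 ?inordK //= ?mxE ?inord_eq10 //=.
  all: rewrite ?e124 ?e125 ?e126 ?e127 ?e128 ?e134 ?e135 ?e136 ?e137 ?e138 ?e145 ?e146 ?e147 ?e148 ?e156 ?e157 ?e158 ?e167 ?e168 ?e178 ?e236 ?e237 ?e238 ?e246 ?e247 ?e248 ?e258 ?e268 ?e279 ?e347 ?e358 ?e359 ?e369 ?e459 ?g0 ?s0; ring. }
split.
  rewrite /avec /=; apply: (@lcK (-1)); first by rewrite oppr_eq0 oner_eq0.
  by rewrite -[RHS]h1259; ring.
split.
  rewrite /avec /=; apply: (@lcK (-1)); first by rewrite oppr_eq0 oner_eq0.
  by rewrite -[RHS]h1238; ring.
rewrite /avec /=; apply: (@lcK (-1)); first by rewrite oppr_eq0 oner_eq0.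
by rewrite -[RHS]h1239; ring.
Qed.
End Core.


Set Implicit Arguments. Unset Strict Implicit. Unset Printing Implicit Defensive.
Arguments S10 {K}. Arguments tab {K}. Arguments up {K}. Arguments jac {K}. Arguments avec {K}. Arguments core {K g}.


Section Br.
Variable K : fieldType.
Implicit Types (c : sconst K) (u v w x y : 'rV[K]_10).

Definition islin (f : 'rV[K]_10 -> 'rV[K]_10) := forall a x y, f (a *: x + y) = a *: f x + f y.

Lemma islin0 f : islin f -> f 0 = 0.
Proof.
move=> hf; have := hf (-1) 0 0; rewrite scaler0 addr0 scaleN1r => h.
by rewrite {1}h addNr.
Qed.

Lemma islinD f : islin f -> forall x y, f (x + y) = f x + f y.
Proof. by move=> hf x y; have := hf 1 x y; rewrite !scale1r. Qed.

Lemma islinZ f : islin f -> forall a x, f (a *: x) = a *: f x.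
Proof. by move=> hf a x; have := hf a x 0; rewrite (islin0 hf) !addr0. Qed.

Lemma islin_sum f (hf : islin f) (I : finType) (a : I -> K) (X : I -> 'rV[K]_10) :
  f (\sum_i a i *: X i) = \sum_i a i *: f (X i).
Proof.
elim/big_rec2: _ => [|i y1 y2 _ <-]; first exact: islin0.
exact: hf.
Qed.

Lemma islin_expand f (hf : islin f) u : f u = \sum_i u 0 i *: f (ebas K i).
Proof. by rewrite {1}(row_sum_delta u) islin_sum. Qed.

Lemma ebas_coord i t : ebas K i 0 t = (t == i)%:R.
Proof. by rewrite /ebas mxE eqxx. Qed.

Lemma br_linl c : forall w, islin (fun u => br c u w).
Proof.
move=> w a x y; rewrite /br scaler_sumr -big_split; apply: eq_bigr => i _.
rewrite scaler_sumr -big_split; apply: eq_bigr => j _.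
rewrite !mxE scalerA /= -scalerDl; congr (_ *: _); ring.
Qed.

Lemma br_linr c : forall w, islin (fun u => br c w u).
Proof.
move=> w a x y; rewrite /br scaler_sumr -big_split; apply: eq_bigr => i _.
rewrite scaler_sumr -big_split; apply: eq_bigr => j _.
rewrite !mxE scalerA /= -scalerDl; congr (_ *: _); ring.
Qed.

Lemma br_ebasl c i v : br c (ebas K i) v = \sum_j v 0 j *: c i j.
Proof.
rewrite /br (bigD1 i) //= [X in _ + X]big1 ?addr0 => [|k hk]; last first.
  by apply: big1 => j _; rewrite ebas_coord (negbTE hk) mul0r scale0r.
by apply: eq_bigr => j _; rewrite ebas_coord eqxx mul1r.
Qed.

Lemma br_ebas c i j : br c (ebas K i) (ebas K j) = c i j.
Proof.
rewrite br_ebasl (bigD1 j) //= big1 ?addr0 => [|k hk].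
  by rewrite ebas_coord eqxx scale1r.
by rewrite ebas_coord (negbTE hk) scale0r.
Qed.

Lemma br_coordl c i v t : br c (ebas K i) v 0 t = \sum_j v 0 j * c i j 0 t.
Proof. by rewrite br_ebasl summxE; apply: eq_bigr => j _; rewrite mxE. Qed.

Lemma br_full c u v : br c u v = \sum_i \sum_j (u 0 i * v 0 j) *: c i j.
Proof. by []. Qed.

Section Lie.
Variable c : sconst K.
Hypothesis hlie : is_lie c.
Hypothesis h2 : (2 : K) != 0.

Lemma br_anti u v : br c u v = - br c v u.
Proof.
rewrite /br exchange_big -sumrN; apply: eq_bigr => i _; rewrite -sumrN.
apply: eq_bigr => j _; case: hlie => _ [ha _]; rewrite (ha j i) scalerN.
by congr (- (_ *: _)); rewrite mulrC.
Qed.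

Lemma br_alt u : br c u u = 0.
Proof.
have h := br_anti u u.
have : (2 : K) *: br c u u = 0 by rewrite scaler_nat mulr2n {1}h addNr.
by move/eqP; rewrite scaler_eq0 (negbTE h2) => /eqP.
Qed.

Definition jacv u v w := br c u (br c v w) + br c v (br c w u) + br c w (br c u v).

Lemma acl3 a (A1 A2 A3 B1 B2 B3 : 'rV[K]_10) :
  (a *: A1 + B1) + (a *: A2 + B2) + (a *: A3 + B3) = a *: (A1 + A2 + A3) + (B1 + B2 + B3).
Proof. by apply/rowP => k; rewrite !mxE; ring. Qed.

Lemma jacv_linl v w : islin (fun u => jacv u v w).
Proof.
move=> a x y; rewrite /jacv.
rewrite (br_linl _ _ a x y) (br_linr _ w a x y) (br_linr _ v) (br_linl _ v a x y) (br_linr _ w).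
by rewrite acl3.
Qed.

Lemma jacv_rot u v w : jacv u v w = jacv v w u.
Proof. by apply/rowP => k; rewrite /jacv !mxE; ring. Qed.

Lemma jacv_ebas i j k : jacv (ebas K i) (ebas K j) (ebas K k) = 0.
Proof. by rewrite /jacv !br_ebas; case: hlie => _ [_ hj]; rewrite -!br_ebas; apply: hj. Qed.

Lemma jacv0 u v w : jacv u v w = 0.
Proof.
rewrite (islin_expand (jacv_linl v w)) big1 // => i _.
rewrite jacv_rot (islin_expand (jacv_linl w _)) big1 ?scaler0 // => j _.
rewrite jacv_rot (islin_expand (jacv_linl _ _)) big1 ?scaler0 // => k _.
by rewrite jacv_rot jacv_ebas scaler0.
Qed.

End Lie.

Definition cob c (P : 'M[K]_10) : sconst K :=
  fun i j => br c (row i P) (row j P) *m invmx P.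

Lemma br_sum2 c (a b : 'I_10 -> K) (X Y : 'I_10 -> 'rV[K]_10) :
  br c (\sum_i a i *: X i) (\sum_j b j *: Y j) = \sum_i \sum_j (a i * b j) *: br c (X i) (Y j).
Proof.
rewrite (islin_sum (br_linl c _)); apply: eq_bigr => i _.
rewrite (islin_sum (br_linr c _)) scaler_sumr; apply: eq_bigr => j _.
by rewrite scalerA.
Qed.

Lemma br_cob c P u v : br (cob c P) u v = br c (u *m P) (v *m P) *m invmx P.
Proof.
transitivity (\sum_i \sum_j (u 0 i * v 0 j) *: cob c P i j) => //.
rewrite (mulmx_sum_row u) (mulmx_sum_row v) br_sum2 mulmx_suml; apply: eq_bigr => i _.
by rewrite mulmx_suml; apply: eq_bigr => j _; rewrite /cob scalemxAl.
Qed.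

Lemma cob_back c P u v w : P \in unitmx -> br (cob c P) u v = w ->
  br c (u *m P) (v *m P) = w *m P.
Proof. by move=> hP; rewrite br_cob => <-; rewrite mulmxKV. Qed.

Lemma cob_lie c P : is_lie c -> (2:K) != 0 -> P \in unitmx -> is_lie (cob c P).
Proof.
move=> hl h2 hP; split; [|split].
- by move=> i; rewrite /cob br_alt // mul0mx.
- by move=> i j; rewrite /cob (br_anti hl) mulNmx.
- move=> i j k; rewrite !br_cob /ebas -!rowE !mulmxKV // -!mulmxDl.
  by have := jacv0 hl (row i P) (row j P) (row k P); rewrite /jacv => ->; rewrite mul0mx.
Qed.

End Br.


Section Chain.
Variable K : fieldType.
Variable c : sconst K.
Hypothesis hlie : is_lie c.

Lemma subN (A : 'M[K]_10) (v : 'rV[K]_10) : (v <= A)%MS -> (- v <= A)%MS.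
Proof. by move=> h; rewrite -scaleN1r scalemx_sub. Qed.

Lemma br_in_brsp (A : 'M[K]_10) u w : (w <= A)%MS -> (br c u w <= brsp c A)%MS.
Proof.
case/submxP=> x ->; rewrite (row_sum_delta u) mulmx_sum_row br_sum2.
apply: summx_sub => i _; apply: summx_sub => j _; apply: scalemx_sub.
apply: (sumsmx_sup i) => //; apply: (sumsmx_sup j) => //.
by rewrite genmxE.
Qed.

Lemma brsp_sub (A B : 'M[K]_10) :
  (forall i j, (br c (ebas K i) (row j A) <= B)%MS) -> (brsp c A <= B)%MS.
Proof.
move=> h; apply/sumsmx_subP => i _; apply/sumsmx_subP => j _.
by rewrite genmxE h.
Qed.

Lemma brsp_mono (A B : 'M[K]_10) : (A <= B)%MS -> (brsp c A <= brsp c B)%MS.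
Proof.
move=> hAB; apply: brsp_sub => i j; apply: br_in_brsp.
exact: submx_trans (row_sub j A) hAB.
Qed.

Lemma lcsS k : lcs c k.+1 = brsp c (lcs c k).
Proof. by []. Qed.

Lemma lcs_dec k : (lcs c k.+1 <= lcs c k)%MS.
Proof.
elim: k => [|k IH]; first exact: submx1.
by rewrite (lcsS k.+1) (lcsS k); apply: brsp_mono.
Qed.

Lemma lcs_decn m n : (m <= n)%N -> (lcs c n <= lcs c m)%MS.
Proof.
move=> /subnK <-; elim: (n - m)%N => [|d IH]; first by rewrite add0n.
by rewrite addSn; apply: submx_trans (lcs_dec _) IH.
Qed.

Lemma lcs_stable m : (lcs c m <= lcs c m.+1)%MS -> forall d, (lcs c (d + m) <= lcs c (d + m).+1)%MS.
Proof.
move=> h; elim=> [|d IH] //.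
by rewrite addSn (lcsS (d + m)) (lcsS (d + m).+1); apply: brsp_mono.
Qed.

Hypothesis hfil : filiform10 c.

Lemma lcs_strict m : (m <= 8)%N -> ~~ (lcs c m <= lcs c m.+1)%MS.
Proof.
move=> hm; apply/negP => h; case: hfil => h8 h9.
have := lcs_stable h (8 - m); rewrite subnK // h9 submx0 => h0.
by rewrite (eqP h0) eqxx in h8.
Qed.

Lemma lcs_rank_lt m : (m <= 8)%N -> (\rank (lcs c m.+1) < \rank (lcs c m))%N.
Proof.
move=> hm; have := lcs_strict hm; have := lcs_dec m => hs hn.
have : (lcs c m.+1 < lcs c m)%MS by rewrite ltmxE hs hn.
by rewrite ltmxErank => /andP[].
Qed.

Lemma sub_add1 (A : 'M[K]_10) (x v : 'rV[K]_10) : (v <= A + x)%MS ->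
  exists l w, (w <= A)%MS /\ v = l *: x + w.
Proof.
case/sub_addsmxP=> [[u1 u2]] /= ->; exists (u2 0 0), (u1 *m A); split; first exact: submxMl.
by rewrite addrC {1}(mx11_scalar u2) mul_scalar_mx.
Qed.

Lemma exists_notin (A : 'M[K]_10) : (\rank A < 10)%N -> exists a, ~~ (ebas K a <= A)%MS.
Proof.
move=> hr; apply/existsP; apply: contraLR hr; rewrite negb_exists => /forallP h.
have : (1%:M <= A)%MS.
  by apply/row_subP => i; rewrite row1; have := h i; rewrite negbK.
by move/mxrankS; rewrite mxrank1 => h'; rewrite -leqNgt.
Qed.

Lemma rank_add1 (A : 'M[K]_10) (x : 'rV[K]_10) : ~~ (x <= A)%MS ->
  \rank (A + x)%MS = (\rank A).+1.
Proof.
move=> hx; have := mxrank_sum_cap A x.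
have hc : (A :&: x <= x)%MS := capmxSr A x.
have hx1 : \rank x = 1%N.
  apply/eqP; rewrite eqn_leq rank_leq_row lt0n mxrank_eq0; apply: contraNneq hx => ->.
  exact: sub0mx.
have -> : \rank (A :&: x)%MS = 0%N.
  case e: (\rank (A :&: x)%MS) => [//|k].
  have hl := mxrank_leqif_sup hc.
  have : (x <= A :&: x)%MS.
    rewrite -hl.2 e hx1; have := mxrankS hc; rewrite e hx1.
    by case: k {e} => // k; rewrite ltnS.
  by move=> h; have := submx_trans h (capmxSl A x); rewrite (negbTE hx).
by rewrite addn0 hx1 addn1.
Qed.


Lemma lcs1_le8 : (\rank (lcs c 1) <= 8)%N.
Proof.
rewrite leqNgt; apply/negP => h9.
have hr : (\rank (lcs c 1) < 10)%N by have := lcs_rank_lt (isT : (0 <= 8)%N); rewrite /= mxrank1.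
have [a ha] := exists_notin hr.
have hfull : row_full (lcs c 1 + ebas K a)%MS.
  by rewrite /row_full rank_add1 //; apply/eqP; lia.
have dec v : exists l w, (w <= lcs c 1)%MS /\ v = l *: ebas K a + w.
  by apply: sub_add1; apply: submx_full.
have : (lcs c 1 <= lcs c 2)%MS.
  rewrite (lcsS 1) (lcsS 0); apply: brsp_sub => i j.
  rewrite -(lcsS 0) -(lcsS 1) row1.
  have [l1 [w1 [hw1 e1]]] := dec (ebas K i).
  have [l2 [w2 [hw2 e2]]] := dec (ebas K j).
  rewrite /ebas in e1 e2 *; rewrite e1 e2.
  rewrite (br_linl c _ l1) (br_linr c _ l2) (br_linr c w1 l2).
  have -> : br c (ebas K a) (ebas K a) = 0 by rewrite br_ebas; case: hlie => ->.
  rewrite scaler0 add0r; apply: addmx_sub.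
    by apply: scalemx_sub; apply: br_in_brsp.
  apply: addmx_sub; last exact: br_in_brsp.
  by apply: scalemx_sub; rewrite (br_anti hlie); apply: subN; apply: br_in_brsp.
by rewrite (negbTE (lcs_strict (isT : (1 <= 8)%N))).
Qed.

Lemma chain_nat (r : nat -> nat) : (r 1 <= 8)%N -> (r 2 < r 1)%N -> (r 3 < r 2)%N -> (r 4 < r 3)%N ->
  (r 5 < r 4)%N -> (r 6 < r 5)%N -> (r 7 < r 6)%N -> (r 8 < r 7)%N -> (r 9 < r 8)%N -> r 9 = 0%N ->
  forall m, (1 <= m <= 9)%N -> r m = (9 - m)%N.
Proof.
move=> h1 h2 h3 h4 h5 h6 h7 h8 h9 h0 m.
case: m => [|[|[|[|[|[|[|[|[|[|m]]]]]]]]]] //= _; lia.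
Qed.

Lemma lcs_rank m : (1 <= m <= 9)%N -> \rank (lcs c m) = (9 - m)%N.
Proof.
move=> hm.
have h1 := lcs1_le8.
have r1 := lcs_rank_lt (isT : (1 <= 8)%N).
have r2 := lcs_rank_lt (isT : (2 <= 8)%N).
have r3 := lcs_rank_lt (isT : (3 <= 8)%N).
have r4 := lcs_rank_lt (isT : (4 <= 8)%N).
have r5 := lcs_rank_lt (isT : (5 <= 8)%N).
have r6 := lcs_rank_lt (isT : (6 <= 8)%N).
have r7 := lcs_rank_lt (isT : (7 <= 8)%N).
have r8 := lcs_rank_lt (isT : (8 <= 8)%N).
have r9 : \rank (lcs c 9) = 0%N by case: hfil => _ ->; rewrite mxrank0.
exact: (@chain_nat (fun k => \rank (lcs c k)) h1 r1 r2 r3 r4 r5 r6 r7 r8 r9 m hm).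
Qed.

End Chain.


Definition low (K : fieldType) (m : nat) (v : 'rV[K]_10) := forall t : 'I_10, (t < m)%N -> v 0 t = 0.

Lemma coordZ (K : fieldType) a (v : 'rV[K]_10) t : (a *: v) 0 t = a * v 0 t.
Proof. by rewrite mxE. Qed.
Lemma coordD (K : fieldType) (u v : 'rV[K]_10) t : (u + v) 0 t = u 0 t + v 0 t.
Proof. by rewrite mxE. Qed.
Lemma coordN (K : fieldType) (v : 'rV[K]_10) t : (- v) 0 t = - v 0 t.
Proof. by rewrite mxE. Qed.
Lemma coordB (K : fieldType) (u v : 'rV[K]_10) t : (u - v) 0 t = u 0 t - v 0 t.
Proof. by rewrite mxE [(- v) 0 t]mxE. Qed.

Lemma low_mono (K : fieldType) m n (v : 'rV[K]_10) : (m <= n)%N -> low n v -> low m v.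
Proof. by move=> hmn h t ht; apply: h; exact: leq_trans ht hmn. Qed.

Lemma lowD (K : fieldType) m (u v : 'rV[K]_10) : low m u -> low m v -> low m (u + v).
Proof. by move=> hu hv t ht; rewrite mxE hu // hv // addr0. Qed.

Lemma lowZ (K : fieldType) m a (u : 'rV[K]_10) : low m u -> low m (a *: u).
Proof. by move=> hu t ht; rewrite mxE hu // mulr0. Qed.

Lemma lowN (K : fieldType) m (u : 'rV[K]_10) : low m u -> low m (- u).
Proof. by move=> hu t ht; rewrite mxE hu // oppr0. Qed.

Lemma low0 (K : fieldType) m : low m (0 : 'rV[K]_10).
Proof. by move=> t _; rewrite mxE. Qed.

Lemma low10 (K : fieldType) (v : 'rV[K]_10) : low 10 v -> v = 0.
Proof. by move=> h; apply/rowP => t; rewrite mxE h. Qed.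

Lemma br_low (K : fieldType) (c : sconst K) m (u v : 'rV[K]_10) :
  (forall a b, v 0 b != 0 -> low m (c a b)) -> low m (br c u v).
Proof.
move=> h t ht; rewrite summxE big1 // => a _; rewrite summxE big1 // => b _.
rewrite mxE; have [hb|hb] := eqVneq (v 0 b) 0; first by rewrite hb mulr0 mul0r.
by rewrite (h a b hb) // mulr0.
Qed.

Lemma lowS (K : fieldType) m (v : 'rV[K]_10) : (m < 10)%N -> low m v -> v 0 (inord m) = 0 -> low m.+1 v.
Proof.
move=> hm hl h0 t ht; rewrite ltnS leq_eqVlt in ht; case/orP: ht => [/eqP e|]; last exact: hl.
by have -> : t = inord m by apply/val_inj; rewrite /= inordK // -e.
Qed.

Section Qb.
Variable K : fieldType.
Variable c : sconst K.
Hypothesis hlie : is_lie c.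
Hypothesis hfil : filiform10 c.

Definition qrow (k : nat) : 'rV[K]_10 :=
  row (odflt ord0 [pick r | ~~ (row r (lcs c k.-1) <= lcs c k)%MS]) (lcs c k.-1).
Definition qa : 'I_10 := odflt ord0 [pick a | ~~ (ebas K a <= lcs c 1)%MS].
Definition qb : 'I_10 := odflt ord0 [pick b | ~~ (ebas K b <= lcs c 1 + ebas K qa)%MS].
Definition qv (i : 'I_10) : 'rV[K]_10 :=
  match nat_of_ord i with 0 => ebas K qb | 1 => ebas K qa | k => qrow k end.
Definition Qm : 'M[K]_10 := \matrix_i qv i.

Lemma qrow_in k : (qrow k <= lcs c k.-1)%MS.
Proof. exact: row_sub. Qed.

Lemma qrow_notin k : (2 <= k <= 9)%N -> ~~ (qrow k <= lcs c k)%MS.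
Proof.
move=> hk; rewrite /qrow; case: pickP => [r //|h].
have : (lcs c k.-1 <= lcs c k)%MS.
  by apply/row_subP => r; apply: negbFE (h r).
have e : k = (k.-1).+1 by lia.
by rewrite {2}e (negbTE (lcs_strict hfil (_ : (k.-1 <= 8)%N))) //; lia.
Qed.

Lemma qa_notin : ~~ (ebas K qa <= lcs c 1)%MS.
Proof.
rewrite /qa; case: pickP => [a //|h].
have hr : (\rank (lcs c 1) < 10)%N by rewrite (lcs_rank hlie hfil) //.
have [a ha] := exists_notin hr; by have := h a; rewrite ha.
Qed.

Lemma qb_notin : ~~ (ebas K qb <= lcs c 1 + ebas K qa)%MS.
Proof.
rewrite /qb; case: pickP => [b //|h].
have hr : (\rank (lcs c 1 + ebas K qa)%MS < 10)%N.
  by rewrite rank_add1 ?qa_notin // (lcs_rank hlie hfil).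
have [b hb] := exists_notin hr; by have := h b; rewrite hb.
Qed.

Lemma rowQ i : row i Qm = qv i.
Proof. exact: rowK. Qed.

Lemma rowQk (k : 'I_10) : (2 <= k)%N -> row k Qm = qrow k.
Proof. by rewrite rowQ /qv; case: k => [[|[|k]]]. Qed.

Definition Dprop m := forall v : 'rV[K]_10,
  (v <= lcs c m.-1)%MS <-> exists l : 'rV[K]_10, low m l /\ v = l *m Qm.

Lemma D10 : Dprop 10.
Proof.
move=> v; case: hfil => _ h9; rewrite (_ : 10.-1 = 9)%N // h9 submx0; split.
  by move/eqP => ->; exists 0; split; [exact: low0 | rewrite mul0mx].
by case=> l [hl ->]; rewrite (low10 hl) mul0mx.
Qed.

Lemma lcs_split k : (2 <= k <= 9)%N -> forall v, (v <= lcs c k.-1)%MS ->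
  exists l w, (w <= lcs c k)%MS /\ v = l *: qrow k + w.
Proof.
move=> hk v hv; apply: sub_add1.
have hs : (lcs c k + qrow k <= lcs c k.-1)%MS.
  rewrite addsmx_sub qrow_in andbT.
  have e : k = (k.-1).+1 by lia.
  by rewrite {1}e lcs_dec.
have hr : \rank (lcs c k + qrow k)%MS = \rank (lcs c k.-1).
  rewrite rank_add1 ?qrow_notin // !(lcs_rank hlie hfil) //; lia.
have := (mxrank_leqif_sup hs).2; rewrite hr eqxx => /esym h.
exact: submx_trans hv h.
Qed.

Lemma Dstep m : (3 <= m <= 10)%N -> Dprop m -> Dprop m.-1.
Proof.
move=> hm hD v; set k := m.-1.
have hk : (2 <= k <= 9)%N by rewrite /k; lia.
have em : m = k.+1 by rewrite /k; lia.
split.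
- move=> hv; have [l [w [hw ->]]] := lcs_split hk hv.
  have : (w <= lcs c m.-1)%MS by rewrite em.
  case/hD => l' [hl' ->].
  exists (l' + l *: ebas K (inord k)); split.
    apply: lowD; first by apply: (low_mono _ hl'); lia.
    move=> t ht; rewrite coordZ ebas_coord.
    have : t != inord k :> 'I_10.
      apply/eqP => e; move: ht; rewrite e inordK //; lia.
    by move/negbTE => ->; rewrite mulr0.
  rewrite mulmxDl addrC -scalemxAl /ebas -rowE rowQk; last by rewrite inordK //; lia.
  by rewrite inordK //; lia.
- case=> l [hl ->].
  have hk' : (k < 10)%N by lia.
  set t0 := Ordinal hk'.
  have -> : l = l 0 t0 *: ebas K t0 + (l - l 0 t0 *: ebas K t0) by rewrite addrC subrK.
  rewrite mulmxDl addmx_sub //.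
    rewrite -scalemxAl scalemx_sub // /ebas -rowE rowQk; last by rewrite /= ; lia.
    exact: qrow_in.
  have : ((l - l 0 t0 *: ebas K t0) *m Qm <= lcs c m.-1)%MS.
    apply/hD; exists (l - l 0 t0 *: ebas K t0); split => //.
    move=> t ht; rewrite coordB coordZ ebas_coord.
    case: eqP => [->|ne]; first by rewrite mulr1 subrr.
    rewrite mulr0 subr0; apply: hl.
    have : (t : nat) != k by apply/eqP => e; apply: ne; apply/val_inj.
    move: ht; rewrite em; lia.
  move/submx_trans; apply; rewrite em /=.
  have e : k = (k.-1).+1 by lia.
  by rewrite {1}e lcs_dec.
Qed.

Lemma Dall m : (2 <= m <= 10)%N -> Dprop m.
Proof.
move=> hm; have e : m = (10 - (10 - m))%N by lia.
rewrite e; have : (10 - m <= 8)%N by lia.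
elim: (10 - m)%N => [_|d IH hd]; first exact: D10.
have e2 : (10 - d.+1)%N = (10 - d).-1 by lia.
rewrite e2; apply: Dstep; first lia.
by apply: IH; lia.
Qed.


Hypothesis h2 : (2 : K) != 0.

Lemma lcs1_subQ : (lcs c 1 <= Qm)%MS.
Proof.
apply/row_subP => r; have := (Dall (isT : (2 <= 2 <= 10)%N) (row r (lcs c 1))).1 (row_sub _ _).
by case=> l [_ ->]; apply: submxMl.
Qed.

Lemma Qunit : Qm \in unitmx.
Proof.
rewrite -row_full_unit.
have hs : (lcs c 1 + ebas K qa + ebas K qb <= Qm)%MS.
  rewrite !addsmx_sub lcs1_subQ /=.
  have -> : ebas K qa = row (inord 1) Qm by rewrite rowQ /qv inordK.
  have -> : ebas K qb = row (inord 0) Qm by rewrite rowQ /qv inordK.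
  by rewrite !row_sub.
have hr : \rank (lcs c 1 + ebas K qa + ebas K qb)%MS = 10%N.
  by rewrite rank_add1 ?qb_notin // rank_add1 ?qa_notin // (lcs_rank hlie hfil).
have := mxrankS hs; rewrite hr /row_full => h; apply/eqP/anti_leq.
by rewrite h rank_leq_col.
Qed.

Lemma lowQ m v : (2 <= m <= 10)%N -> (v <= lcs c m.-1)%MS <-> low m (v *m invmx Qm).
Proof.
move=> hm; rewrite (Dall hm v); split.
  by case=> l [hl ->]; rewrite mulmxK // Qunit.
by move=> h; exists (v *m invmx Qm); rewrite mulmxKV // Qunit.
Qed.

Definition c1 := cob c Qm.

Lemma c1_lie : is_lie c1.
Proof. exact: cob_lie hlie h2 Qunit. Qed.

Lemma P2 (i j : 'I_10) : (2 <= j)%N -> low j.+1 (c1 i j).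
Proof.
move=> hj; rewrite /c1 /cob.
have hm : (2 <= j.+1 <= 10)%N by apply/andP; split; [lia | exact: ltn_ord].
apply: (proj1 (lowQ _ hm)).
have e : j.+1.-1 = (j.-1).+1 by lia.
rewrite e lcsS; apply: br_in_brsp; rewrite rowQk //.
exact: qrow_in.
Qed.

Lemma P2' : low 2 (c1 (inord 0) (inord 1)).
Proof.
rewrite /c1 /cob; apply: (proj1 (lowQ _ (isT : (2 <= 2 <= 10)%N))).
rewrite (_ : 2.-1 = 1)%N // (lcsS c 0); apply: br_in_brsp; exact: submx1.
Qed.

Lemma brQ u v : br c (u *m Qm) (v *m Qm) = br c1 u v *m Qm.
Proof. by rewrite /c1 br_cob mulmxKV // Qunit. Qed.

Lemma sub_via_c1 (A : 'M[K]_10) m : (2 <= m <= 10)%N ->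
  (forall u v, (v <= A)%MS -> low m (br c1 (u *m invmx Qm) (v *m invmx Qm))) ->
  (brsp c A <= lcs c m.-1)%MS.
Proof.
move=> hm h; apply: brsp_sub => i j.
apply: (proj2 (lowQ _ hm)).
have -> : br c (ebas K i) (row j A) =
   br c ((ebas K i *m invmx Qm) *m Qm) ((row j A *m invmx Qm) *m Qm) by rewrite !mulmxKV // Qunit.
by rewrite brQ mulmxK ?Qunit //; apply: h; apply: row_sub.
Qed.

Lemma P3 (k : 'I_10) : (2 <= k <= 8)%N -> [exists i, c1 i k 0 (inord k.+1) != 0].
Proof.
move=> hk; rewrite -negb_forall; apply/negP => /forallP h.
have : (lcs c k <= lcs c k.+1)%MS.
  have e : (k : nat) = (k.-1).+1 by lia.
  rewrite {1}e lcsS (_ : k.+1 = (k.+2).-1) //.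
  apply: sub_via_c1; first lia.
  move=> u v hv.
  have hl : low k (v *m invmx Qm).
    by apply: (proj1 (lowQ _ _)) => //; lia.
  apply: br_low => a b hb.
  have hbk : (k <= b)%N.
    rewrite leqNgt; apply: contra hb => hbk; apply/eqP; exact: hl.
  rewrite leq_eqVlt in hbk; case/orP: hbk => [/eqP eb|hbk].
    have -> : b = k by apply/val_inj.
    apply: lowS; first lia.
      by apply: P2; lia.
    by apply/eqP; apply: h.
  by apply: (low_mono _ (P2 a _)); lia.
by rewrite (negbTE (lcs_strict hfil (_ : (k <= 8)%N))) //; lia.
Qed.

Lemma c1_anti i j : c1 i j = - c1 j i.
Proof. by case: c1_lie => _ [h _]; apply: h. Qed.

Lemma c1_diag i : c1 i i = 0.
Proof. by case: c1_lie => h _; apply: h. Qed.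

Lemma P3' : c1 (inord 0) (inord 1) 0 (inord 2) != 0.
Proof.
apply/negP => /eqP h.
have : (lcs c 1 <= lcs c 2)%MS.
{ rewrite {1}(lcsS c 0); change (brsp c (lcs c 0) <= lcs c 3.-1)%MS.
  apply: sub_via_c1 => // u v _.
  apply: br_low => a b _.
  have h01 : low 3 (c1 (inord 0) (inord 1)) by apply: lowS => //; exact: P2'.
  case: (leqP 2 b) => hb; first by apply: (low_mono _ (P2 a hb)); lia.
  case: (leqP 2 a) => ha.
    by rewrite c1_anti; apply: lowN; apply: (low_mono _ (P2 b ha)); lia.
  have [ea|ea] : a = inord 0 \/ a = inord 1.
    by case: a ha => [[|[|a]]] //= ? _; [left|right]; apply/val_inj; rewrite /= inordK.
  all: have [eb|eb] : b = inord 0 \/ b = inord 1 by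
    case: b hb => [[|[|b]]] //= ? _; [left|right]; apply/val_inj; rewrite /= inordK.
  all: rewrite ea eb ?c1_diag; try exact: low0; try exact: h01.
  by rewrite c1_anti; apply: lowN. }
by rewrite (negbTE (lcs_strict hfil (_ : (1 <= 8)%N))).
Qed.

End Qb.


Section NonRoot.
Variable K : fieldType.
Hypothesis hn : forall n, (n%:R == 0 :> K) = (n == 0)%N.

Lemma natr_injK : injective (fun n : nat => n%:R : K).
Proof.
move=> m n /= e; wlog h : m n e / (m <= n)%N.
  by move=> W; case: (leqP m n) => h; [exact: W | apply/esym/W => //; exact: ltnW].
have : ((n - m)%:R == 0 :> K) by rewrite natrB // e subrr.
by rewrite hn subn_eq0 => h'; apply/eqP; rewrite eqn_leq h h'.
Qed.

Lemma exists_nonroot (q : {poly K}) : q != 0 -> exists n : nat, q.[n%:R] != 0.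
Proof.
move=> hq; set rs := [seq n%:R | n <- iota 0 (size q)] : seq K.
case: (boolP (all (root q) rs)) => h.
  have := max_poly_roots hq h; rewrite map_inj_uniq ?iota_uniq; last exact: natr_injK.
  by rewrite size_map size_iota ltnn => /(_ isT).
case/allPn: h => x /mapP [n _ ->] hx; by exists n.
Qed.
End NonRoot.

Section Xs.
Variable K : fieldType.
Variable c : sconst K.
Hypothesis hlie : is_lie c.
Hypothesis h2 : (2 : K) != 0.
Hypothesis hn : forall n, (n%:R == 0 :> K) = (n == 0)%N.
Hypothesis H2 : forall i j : 'I_10, (2 <= j)%N -> low j.+1 (c i j).
Hypothesis H2' : low 2 (c (inord 0) (inord 1)).
Hypothesis H3 : forall k : 'I_10, (2 <= k <= 8)%N -> [exists i, c i k 0 (inord k.+1) != 0].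
Hypothesis H3' : c (inord 0) (inord 1) 0 (inord 2) != 0.

Lemma c_anti i j : c i j = - c j i.
Proof. by case: hlie => _ [h _]; apply: h. Qed.

Lemma c_diag i : c i i = 0.
Proof. by case: hlie => h _; apply: h. Qed.

Lemma c_low_col (a b : 'I_10) : (1 <= b)%N -> low b.+1 (c a b).
Proof.
move=> hb; case: (leqP 2 b) => hb2; first exact: H2.
have eb : b = inord 1 by apply/val_inj; rewrite /= inordK //; lia.
case: (leqP 2 a) => ha.
  by rewrite c_anti; apply: lowN; apply: (low_mono _ (H2 _ ha)); rewrite eb inordK //; lia.
have [ea|ea] : a = inord 0 \/ a = inord 1.
  by case: a ha => [[|[|a]]] //= ? _; [left|right]; apply/val_inj; rewrite /= inordK.
  have -> : b.+1 = 2%N by rewrite eb inordK.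
  by rewrite ea eb; exact: H2'.
by rewrite ea eb c_diag; exact: low0.
Qed.

Lemma br_lowS k u v : (1 <= k)%N -> low k v -> low k.+1 (br c u v).
Proof.
move=> hk hv; apply: br_low => a b hb.
have hbk : (k <= b)%N by rewrite leqNgt; apply: contra hb => h; apply/eqP; exact: hv.
by apply: (low_mono _ (c_low_col a _)); lia.
Qed.

Definition fk (k : nat) (u : 'rV[K]_10) := \sum_a u 0 a * c a (inord k) 0 (inord k.+1).

Lemma br_coordS k u v : (1 <= k <= 8)%N -> low k v ->
  br c u v 0 (inord k.+1) = v 0 (inord k) * fk k u.
Proof.
move=> hk hv; rewrite /fk summxE mulr_sumr; apply: eq_bigr => a _.
rewrite summxE (bigD1 (inord k)) //= big1 ?addr0 => [|b hb].
  by rewrite mxE; ring.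
rewrite mxE; have [hbk|hbk] := leqP b k.
  have hbk' : (b < k)%N.
    rewrite ltn_neqAle hbk andbT; apply: contra hb => /eqP e.
    by apply/eqP/val_inj; rewrite /= inordK //; lia.
  by rewrite hv // mulr0 mul0r.
have hb1 : (1 <= b)%N by lia.
by rewrite (c_low_col a hb1) ?mulr0 // inordK //; lia.
Qed.

Definition pk (k : nat) : {poly K} := \poly_(a < 10) c (inord a) (inord k) 0 (inord k.+1).

Lemma pk_neq0 k : (1 <= k <= 8)%N -> pk k != 0.
Proof.
move=> hk; case: (leqP 2 k) => hk2.
  have hk' : (2 <= (inord k : 'I_10) <= 8)%N by rewrite inordK //; lia.
  case/existsP: (H3 hk') => i; rewrite inordK; last lia.
  move=> hi; apply/eqP => /polyP /(_ i).
  by rewrite coef_poly ltn_ord coef0 inord_val => /eqP; rewrite (negbTE hi).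
have ek : k = 1%N by lia.
apply/eqP => /polyP /(_ 0%N); rewrite coef_poly /= coef0 ek => /eqP.
by rewrite (negbTE H3').
Qed.

Definition qall : {poly K} := \prod_(k < 8) pk k.+1.

Lemma qall_neq0 : qall != 0.
Proof. by apply/prodf_neq0 => k _; apply: pk_neq0; have := ltn_ord k; lia. Qed.

Definition s0 : K := (xchoose (exists_nonroot hn qall_neq0))%:R.

Definition xv : 'rV[K]_10 := \row_a s0 ^+ a.

Lemma fk_neq0 k : (1 <= k <= 8)%N -> fk k xv != 0.
Proof.
move=> hk; have := xchooseP (exists_nonroot hn qall_neq0).
rewrite -/s0 /qall horner_prod => /prodf_neq0 /(_ (inord k.-1) isT).
rewrite inordK; last lia.
have -> : (k.-1).+1 = k by lia.
rewrite /pk horner_poly /fk.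
have -> : \sum_(i < 10) c (inord i) (inord k) 0 (inord k.+1) * s0 ^+ i =
          \sum_a xv 0 a * c a (inord k) 0 (inord k.+1).
  by apply: eq_bigr => a _; rewrite mxE inord_val mulrC.
by [].
Qed.

Fixpoint Xs (k : nat) : 'rV[K]_10 :=
  match k with 0 => xv | 1 => ebas K 1 | k'.+1 => br c xv (Xs k') end.

Lemma XsS k : (1 <= k)%N -> Xs k.+1 = br c xv (Xs k).
Proof. by case: k. Qed.

Lemma Xs_low k : (1 <= k)%N -> low k (Xs k).
Proof.
elim: k => // k IH hk; case: (leqP k 0) => hk0.
  have -> : k = 0%N by lia.
  move=> t ht; rewrite /= ebas_coord.
  have -> : (t == 1 :> 'I_10) = false by apply/negbTE; apply/eqP => e; rewrite e in ht.
  by [].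
by rewrite XsS //; apply: br_lowS => //; apply: IH.
Qed.

Lemma Xs_diag k : (1 <= k <= 9)%N -> Xs k 0 (inord k) != 0.
Proof.
elim: k => // k IH hk; case: (leqP k 0) => hk0.
  have -> : k = 0%N by lia.
  rewrite /= ebas_coord (_ : inord 1 == 1 :> 'I_10) ?oner_eq0 //.
  by apply/eqP/val_inj; rewrite /= inordK.
have hk1 : (1 <= k <= 8)%N by lia.
rewrite XsS; last lia.
rewrite br_coordS //; last by apply: Xs_low; lia.
rewrite mulf_neq0 ?fk_neq0 // IH //; lia.
Qed.

Lemma Xs10 : Xs 10 = 0.
Proof. by apply: low10; apply: Xs_low. Qed.

Definition Pm : 'M[K]_10 := \matrix_i Xs i.

Lemma rowPm (i : 'I_10) : row i Pm = Xs i.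
Proof. exact: rowK. Qed.

Lemma Pm_entry (i j : 'I_10) : Pm i j = Xs i 0 j.
Proof. by rewrite /Pm mxE. Qed.

Lemma Pm_upper (i j : 'I_10) : (j < i)%N -> Pm i j = 0.
Proof. by move=> hji; rewrite Pm_entry Xs_low //; lia. Qed.

Lemma Pm_diag (i : 'I_10) : Pm i i != 0.
Proof.
rewrite Pm_entry; case: (leqP 1 i) => hi.
  have hi9 : (1 <= i <= 9)%N by have := ltn_ord i; lia.
  by have := Xs_diag hi9; rewrite inord_val.
have -> : i = 0 by apply/val_inj; rewrite /=; lia.
by rewrite /= mxE expr0 oner_eq0.
Qed.

Lemma Pm_unit : Pm \in unitmx.
Proof.
rewrite unitmxE -det_tr det_trig ?unitfE.
  by apply/prodf_neq0 => i _; rewrite mxE Pm_diag.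
apply/forallP => i; apply/forallP => j; apply/implyP => h.
by rewrite mxE Pm_upper.
Qed.

Lemma low_invP m v : low m v -> low m (v *m invmx Pm).
Proof.
move=> hv; set w := v *m invmx Pm.
have ev : v = w *m Pm by rewrite /w mulmxKV // Pm_unit.
suff H : forall n (t : 'I_10), val t = n -> (t < m)%N -> w 0 t = 0 by move=> t; apply: H.
elim/ltn_ind => n IH t et htm.
have := hv t htm; rewrite ev mxE (bigD1 t) //= big1 ?addr0 => [|s hs].
  by move/eqP; rewrite mulf_eq0 (negbTE (Pm_diag t)) orbF => /eqP.
case: (ltngtP s t) => hst.
- by rewrite (IH s) ?mul0r //; [rewrite -et | lia].
- by rewrite Pm_upper // mulr0.
- by move: hs; rewrite (val_inj hst) eqxx.
Qed.

Definition c2 := cob c Pm.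

Lemma c2_lie : is_lie c2.
Proof. exact: cob_lie hlie h2 Pm_unit. Qed.

Lemma c2A (i : 'I_10) : (1 <= i)%N ->
  c2 0 i = if (i < 9)%N then ebas K (inord i.+1) else 0.
Proof.
move=> hi; rewrite /c2 /cob !rowPm -XsS //.
case: ifP => h9.
  have -> : Xs i.+1 = row (inord i.+1) Pm by rewrite rowPm inordK.
  by rewrite rowE mulmxK // Pm_unit.
have -> : i.+1 = 10%N by have := ltn_ord i; lia.
by rewrite Xs10 mul0mx.
Qed.

Lemma br_oppr u v : br c u (- v) = - br c u v.
Proof. by rewrite -scaleN1r (islinZ (br_linr c u)) scaleN1r. Qed.

Lemma Xbr i : (1 <= i)%N -> forall j, (1 <= j)%N -> low (i + j) (br c (Xs i) (Xs j)).
Proof.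
elim: i => // i IH hi j hj; case: (leqP i 0) => hi0.
  have -> : i = 0%N by lia.
  by rewrite add1n /=; apply: br_lowS => //; apply: Xs_low.
rewrite XsS //.
have J := jacv0 hlie xv (Xs i) (Xs j); rewrite /jacv in J.
have -> : br c (br c xv (Xs i)) (Xs j) =
   br c xv (br c (Xs i) (Xs j)) + br c (Xs i) (br c (Xs j) xv).
  rewrite (br_anti hlie) -[RHS]opprK; congr (- _).
  by apply/eqP; rewrite -addr_eq0 addrC J.
apply: lowD.
  by rewrite addSn; apply: br_lowS; [lia | apply: IH].
rewrite (br_anti hlie (Xs j)) br_oppr -XsS // ; apply: lowN.
by rewrite addSnnS; apply: IH; lia.
Qed.

Lemma c2B (i j : 'I_10) : (1 <= i)%N -> (1 <= j)%N -> low (i + j) (c2 i j).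
Proof.
by move=> hi hj; rewrite /c2 /cob !rowPm; apply: low_invP; apply: Xbr.
Qed.

End Xs.


Section Sh.
Variable K : fieldType.
Variable c : sconst K.
Hypothesis hlie : is_lie c.
Hypothesis h2 : (2 : K) != 0.
Hypothesis HA : forall i : 'I_10, (1 <= i)%N -> c 0 i = if (i < 9)%N then ebas K (inord i.+1) else 0.
Hypothesis HB : forall i j : 'I_10, (1 <= i)%N -> (1 <= j)%N -> low (i + j) (c i j).

Definition beta := c (inord 1) (inord 8) 0 (inord 9).
Definition Nm : 'M[K]_10 := delta_mx (inord 1) (inord 0).
Definition Sm : 'M[K]_10 := 1%:M - beta *: Nm.
Definition Tm : 'M[K]_10 := 1%:M + beta *: Nm.

Lemma i01 : (inord 0 == inord 1 :> 'I_10) = false.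
Proof. by rewrite inord_eq10. Qed.

Lemma NN : Nm *m Nm = 0.
Proof. by rewrite /Nm mul_delta_mx_cond i01. Qed.

Lemma STm : Sm *m Tm = 1%:M.
Proof.
rewrite /Sm /Tm mulmxBl !mulmxDr !mulmx1 mul1mx -!scalemxAl -!scalemxAr NN !scaler0 addr0.
by rewrite addrK.
Qed.

Lemma Sm_unit : Sm \in unitmx.
Proof. by case: (mulmx1_unit STm). Qed.

Lemma invSm : invmx Sm = Tm.
Proof. by rewrite -[RHS](mulKmx Sm_unit) STm mulmx1. Qed.

Definition bi (i : 'I_10) : K := if i == inord 1 then beta else 0.

Lemma rowSm i : row i Sm = (- bi i) *: ebas K (inord 0) + ebas K i.
Proof.
apply/rowP => t; rewrite !mxE /bi eqxx /=.
by rewrite eq_sym; case: (i == inord 1) => /=; ring.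
Qed.

Lemma Tfix (v : 'rV[K]_10) : v 0 (inord 1) = 0 -> v *m Tm = v.
Proof.
move=> h; rewrite /Tm mulmxDr mulmx1 -scalemxAr.
suff -> : v *m Nm = 0 by rewrite scaler0 addr0.
apply/rowP => t; rewrite !mxE big1 // => s _; rewrite mxE.
by case: (s =P inord 1) => [->|_]; rewrite ?h ?mul0r ?andbF ?mulr0.
Qed.

Definition c3 := cob c Sm.

Lemma c3_lie : is_lie c3.
Proof. exact: cob_lie hlie h2 Sm_unit. Qed.

Lemma c3E i j : c3 i j = br c (row i Sm) (row j Sm) *m Tm.
Proof. by rewrite /c3 /cob invSm. Qed.

Lemma c_diag3 i : c i i = 0.
Proof. by case: hlie => h _; apply: h. Qed.

Lemma c_anti3 i j : c i j = - c j i.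
Proof. by case: hlie => _ [h _]; apply: h. Qed.

Lemma brS i j : br c (row i Sm) (row j Sm) =
  (- bi i) *: ((- bi j) *: c (inord 0) (inord 0) + c (inord 0) j) + ((- bi j) *: c i (inord 0) + c i j).
Proof.
by rewrite !rowSm (br_linl c) !(br_linr c) !br_ebas.
Qed.

Lemma c0_low (j : 'I_10) : (1 <= j)%N -> low j.+1 (c 0 j).
Proof.
move=> hj; rewrite HA //; case: ifP => h9; last exact: low0.
move=> t ht; rewrite ebas_coord; case: (t =P inord j.+1) => // e.
by move: ht; rewrite e inordK ?ltnn // h9.
Qed.

Lemma i0 : (inord 0 : 'I_10) = 0.
Proof. by apply/val_inj; rewrite /= inordK. Qed.

Lemma c3A (i : 'I_10) : (1 <= i)%N -> c3 0 i = if (i < 9)%N then ebas K (inord i.+1) else 0.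
Proof.
move=> hi; rewrite c3E brS /bi (_ : (0 : 'I_10) == inord 1 = false); last first.
  by rewrite -i0 i01.
rewrite oppr0 !scale0r !add0r i0 c_diag3 scaler0 add0r.
rewrite Tfix ?HA //.
have := c0_low hi; rewrite HA // => h; apply: h; rewrite inordK //; lia.
Qed.

Lemma lowbc (i j : 'I_10) : (1 <= i)%N -> (1 <= j)%N -> low (i + j) ((- bi i) *: c 0 j).
Proof.
move=> hi hj; rewrite /bi; case: (i =P inord 1) => [e|_]; last by rewrite oppr0 scale0r; exact: low0.
apply: lowZ; rewrite e inordK // add1n; exact: c0_low.
Qed.

Lemma c3B (i j : 'I_10) : (1 <= i)%N -> (1 <= j)%N -> low (i + j) (c3 i j).
Proof.
move=> hi hj; rewrite c3E brS i0 c_diag3 scaler0 add0r.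
have hl : low (i + j) ((- bi i) *: c 0 j + ((- bi j) *: c i 0 + c i j)).
  apply: lowD; first exact: lowbc.
  apply: lowD => //; last exact: HB.
  by rewrite c_anti3 scalerN; apply: lowN; rewrite addnC; apply: lowbc.
rewrite Tfix //; apply: hl; rewrite inordK //; lia.
Qed.

Lemma c3C : c3 (inord 1) (inord 8) 0 (inord 9) = 0.
Proof.
have h1 : (1 <= (inord 1 : 'I_10))%N by rewrite inordK.
have h8 : (1 <= (inord 8 : 'I_10))%N by rewrite inordK.
rewrite c3E brS i0 c_diag3 scaler0 add0r.
rewrite /bi eqxx (_ : (inord 8 : 'I_10) == inord 1 = false) ?inord_eq10 //.
rewrite oppr0 scale0r add0r Tfix; last first.
  have hl : low 2 ((- beta) *: c 0 (inord 8) + c (inord 1) (inord 8)).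
    apply: lowD; first by apply: lowZ; apply: (low_mono _ (c0_low h8)); rewrite inordK.
    by apply: (low_mono _ (HB h1 h8)); rewrite !inordK.
  by apply: hl; rewrite inordK.
rewrite !mxE HA // inordK // /= ebas_coord eqxx mulr1 /beta; ring.
Qed.

End Sh.


Lemma sum10 (K : fieldType) (F : 'I_10 -> K) : \sum_m F m = S10 (fun m => F (inord m)).
Proof.
rewrite (eq_bigr (fun m : 'I_10 => F (inord m))) => [|m _]; last by rewrite inord_val.
by rewrite !big_ord_recr big_ord0 /= add0r /S10.
Qed.

Section Bridge.
Variable K : fieldType.
Variable c : sconst K.
Hypothesis hlie : is_lie c.
Hypothesis h2 : (2 : K) != 0.
Hypothesis h3 : (3 : K) != 0.
Hypothesis HA : forall i : 'I_10, (1 <= i)%N -> c 0 i = if (i < 9)%N then ebas K (inord i.+1) else 0.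
Hypothesis HB : forall i j : 'I_10, (1 <= i)%N -> (1 <= j)%N -> low (i + j) (c i j).
Hypothesis HC : c (inord 1) (inord 8) 0 (inord 9) = 0.

Definition G3 (a b t : nat) : K := c (inord a) (inord b) 0 (inord t).

Lemma Gup a b t : (a < b)%N -> (b < 10)%N -> (t < 10)%N -> G3 a b t = up G3 a b t.
Proof.
move=> hab hb ht; rewrite /up.
case: (Nat.eqb_spec a 0) => [ea|na].
  subst a; rewrite /G3 i0 HA; last by rewrite inordK.
  rewrite inordK //.
  case: (Nat.leb_spec b 8) => hb8 /=.
    have -> : (b < 9)%N by lia.
    rewrite ebas_coord inord_eq10 //; last lia.
    case: (Nat.eqb_spec t b.+1) => [->|ne]; first by rewrite eqxx.
    by move/eqP/negbTE: ne => ->.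
  have -> : (b < 9)%N = false by lia.
  by rewrite mxE.
case: (Nat.ltb_spec t (Nat.add a b)) => htab /=.
  rewrite /G3; apply: HB; rewrite ?inordK //; lia.
case: (Nat.eqb_spec a 1) => [ea|na1]; case: (Nat.eqb_spec b 8) => [eb|nb8] //=.
subst a b; have -> : t = 9%N by lia.
exact: HC.
Qed.

Lemma Gtab a b t : (a < 10)%N -> (b < 10)%N -> (t < 10)%N -> G3 a b t = tab G3 a b t.
Proof.
move=> ha hb ht; rewrite /tab.
case: (Nat.eqb_spec a b) => [<-|nab].
  by rewrite /G3; case: hlie => -> _; rewrite mxE.
case: (Nat.ltb_spec a b) => h; first by apply: Gup => //; lia.
rewrite -Gup //; last lia.
by rewrite /G3; case: hlie => _ [-> _]; rewrite mxE.
Qed.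

Lemma Gjac i j k t : (i < 10)%N -> (j < 10)%N -> (k < 10)%N -> (t < 10)%N -> jac (tab G3) i j k t = 0.
Proof.
move=> hi hj hk ht.
have := (proj2 (proj2 hlie)) (inord i) (inord j) (inord k).
move/(congr1 (fun v : 'rV[K]_10 => v 0 (inord t))).
rewrite !coordD !br_ebas !br_coordl !sum10 mxE => H.
rewrite /jac /S10 -!Gtab //; rewrite /S10 in H; rewrite -[RHS]H /G3; ring.
Qed.

Lemma bridge : exists a : nat -> K,
  (forall i j : 'I_10, (i < j)%N -> c i j = F10 a i j) /\
  (a 1%N * (2 * a 2%N + 7 * a 4%N + 7 * a 7%N) = 0 /\
  3 * a 4%N ^+ 2 + 3 * a 4%N * a 7%N - 2 * a 2%N * a 7%N = 0 /\
  a 1%N * (2 * a 9%N + 5 * a 11%N) - 2 * a 2%N * a 10%N + a 4%N * (7 * a 8%N - 2 * a 10%N)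
    + a 7%N * (- 3 * a 5%N + 2 * a 8%N - 7 * a 10%N) = 0).
Proof.
have [H1 H2] := core h2 h3 Gjac.
exists (avec G3); split => //.
move=> i j hij; apply/rowP => t.
have := H1 i j t hij (ltn_ord j) (ltn_ord t).
by rewrite -Gtab // /G3 !inord_val.
Qed.

End Bridge.


Theorem proposition28 (K : closedFieldType) (hK : [pchar K] =i pred0)
    (c : sconst K) (hlie : is_lie c) (hfil : filiform10 c) :
  exists (P : 'M[K]_10) (a : nat -> K),
    P \in unitmx /\
    (forall i j : 'I_10, (i < j)%N -> br c (row i P) (row j P) = F10 a i j *m P) /\
    a 1%N * (2 * a 2%N + 7 * a 4%N + 7 * a 7%N) = 0 /\
    3 * a 4%N ^+ 2 + 3 * a 4%N * a 7%N - 2 * a 2%N * a 7%N = 0 /\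
    a 1%N * (2 * a 9%N + 5 * a 11%N) - 2 * a 2%N * a 10%N + a 4%N * (7 * a 8%N - 2 * a 10%N)
      + a 7%N * (- 3 * a 5%N + 2 * a 8%N - 7 * a 10%N) = 0.
Proof.
have hn : forall n, (n%:R == 0 :> K) = (n == 0)%N by apply/pcharf0P.
have h2 : (2 : K) != 0 by rewrite hn.
have h3 : (3 : K) != 0 by rewrite hn.
set c1' := c1 c.
have L1 : is_lie c1' := c1_lie hlie hfil h2.
have H2 : forall i j : 'I_10, (2 <= j)%N -> low j.+1 (c1' i j) := P2 hlie hfil h2.
have H2' : low 2 (c1' (inord 0) (inord 1)) := P2' hlie hfil.
have H3 := P3 hlie hfil h2.
have H3' := P3' hlie hfil h2.
set P2m := Pm h2 hn H3 H3'.
set c2' := c2 h2 hn H3 H3'.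
have L2 : is_lie c2' := c2_lie L1 h2 hn H2 H2' H3 H3'.
have HA2 := c2A L1 h2 hn H2 H2' H3 H3'.
have HB2 := c2B L1 h2 hn H2 H2' H3 H3'.
set c3' := c3 c2'.
have L3 : is_lie c3' := c3_lie L2 h2.
have HA3 := c3A L2 HA2.
have HB3 := c3B L2 h2 HA2 HB2.
have HC3 := c3C L2 HA2 HB2.
have [a [Ha Hc]] := bridge L3 h2 h3 HA3 HB3 HC3.
have uQ := Qunit hlie hfil.
have uP : P2m \in unitmx := Pm_unit L1 h2 hn H2 H2' H3 H3'.
have uS := Sm_unit c2'.
exists (Sm c2' *m P2m *m Qm c), a; split.
  by rewrite !unitmx_mul uQ uP uS.
split; last exact: Hc.
move=> i j hij.
have e3 : br c3' (ebas K i) (ebas K j) = F10 a i j by rewrite br_ebas; exact: Ha.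
have e2 := cob_back uS e3.
have e1 := cob_back uP e2.
have e0 := cob_back uQ e1.
by rewrite !row_mul !rowE !mulmxA; exact: e0.
Qed.
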